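(* Let $G \le \mathrm{Sym}(\mathbb{N})$ be a countable cofinitary group, let $F \subseteq \mathrm{Sym}(\mathbb{N})\setminus G$ be a countable family of permutations such that for every $f\in F$ the group $\langle G, f\rangle$ is cofinitary, and let $z \in 2^{\mathbb{N}}$. Then there exists $g \in \mathrm{Sym}(\mathbb{N})$ such that $\langle G, g\rangle$ is cofinitary, for every $f \in F$ the set $\{n : f(n)=g(n)\}$ is infinite, and $z$ is recursive in $w(g)$ for every $w \in W_G \setminus G$.
   Context: $\mathrm{Sym}(\mathbb{N})$ is the group of bijections of $\mathbb{N}$; a subgroup is cofinitary if each non-identity element has finitely many fixed points. $\langle G, g\rangle$ denotes the subgroup generated by $G\cup\{g\}$. $W_G$ is the free product $G * F(x)$ of $G$ with the free group on one generator $x$; for $w \in W_G$ and a permutation $g$, $w(g)$ denotes the permutation obtained by substituting $g$ for $x$ and evaluating in $\mathrm{Sym}(\mathbb{N})$; $G$ is regarded as a subset of $W_G$ (words containing no $x$). *)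

(* Defs.v *)
(* Permutations of N are represented as functions nat -> nat
   (with bijectivity stated explicitly); sets of permutations as predicates. *)
From Stdlib Require Import Arith List ZArith.
Import ListNotations.

Definition is_bij (f : nat -> nat) : Prop :=
  exists h : nat -> nat, (forall n, f (h n) = n) /\ (forall n, h (f n) = n).

Definition IsSubgroup (G : (nat -> nat) -> Prop) : Prop :=
  (forall f, G f -> is_bij f) /\
  G (fun n => n) /\
  (forall f h, G f -> G h -> G (fun n => f (h n))) /\
  (forall f h, G f -> (forall n, f (h n) = n) -> (forall n, h (f n) = n) -> G h).

Definition Cofinitary (G : (nat -> nat) -> Prop) : Prop :=
  forall f, G f -> (exists n, f n <> n) ->
    exists N, forall n, f n = n -> n < N.

Definition CountableSet (S : (nat -> nat) -> Prop) : Prop :=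
  exists e : nat -> (nat -> nat), forall f, S f -> exists k, e k = f.

Inductive gen (S : (nat -> nat) -> Prop) : (nat -> nat) -> Prop :=
| gen_base f : S f -> gen S f
| gen_id : gen S (fun n => n)
| gen_comp f h : gen S f -> gen S h -> gen S (fun n => f (h n))
| gen_inv f h : gen S f -> (forall n, f (h n) = n) -> (forall n, h (f n) = n) ->
    gen S h.

Definition genWith (G : (nat -> nat) -> Prop) (g : nat -> nat) :=
  gen (fun f => G f \/ f = g).

(* a letter is a non-identity element of G or a non-zero power x^k *)
Inductive letter : Type :=
| LG (h : nat -> nat)
| LX (k : Z).

Definition letter_ok (G : (nat -> nat) -> Prop) (a : letter) : Prop :=
  match a with
  | LG h => G h /\ exists n, h n <> n
  | LX k => k <> 0%Z
  end.

Definition same_kind (a b : letter) : Prop :=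
  match a, b with
  | LG _, LG _ => True
  | LX _, LX _ => True
  | _, _ => False
  end.

Fixpoint alternating (w : list letter) : Prop :=
  match w with
  | [] => True
  | a :: w' =>
      match w' with
      | [] => True
      | b :: _ => ~ same_kind a b /\ alternating w'
      end
  end.

(* reduced words = normal forms of elements of G * F(x) *)
Definition ReducedWord (G : (nat -> nat) -> Prop) (w : list letter) : Prop :=
  Forall (letter_ok G) w /\ alternating w.

(* the element represented by w lies outside G iff its normal form contains x *)
Definition has_x (w : list letter) : Prop :=
  exists k, In (LX k) w.

(* w(g): substitute g for x (ginv is the inverse permutation of g) *)
Definition letter_eval (g ginv : nat -> nat) (a : letter) : nat -> nat :=
  match a with
  | LG h => h
  | LX k => fun n => Nat.iter (Z.abs_nat k) (if (0 <? k)%Z then g else ginv) n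
  end.

Definition word_eval (g ginv : nat -> nat) (w : list letter) : nat -> nat :=
  fold_right (fun a acc => fun n => letter_eval g ginv a (acc n)) (fun n => n) w.

Inductive prf : Type :=
| PZero
| PSucc
| PProj (i : nat)
| POracle
| PComp (f : prf) (gs : list prf)
| PPrimRec (f g : prf)
| PMu (f : prf).

Inductive peval (o : nat -> nat) : prf -> list nat -> nat -> Prop :=
| ev_zero v : peval o PZero v 0
| ev_succ x v : peval o PSucc (x :: v) (S x)
| ev_proj i v : i < length v -> peval o (PProj i) v (nth i v 0)
| ev_oracle x v : peval o POracle (x :: v) (o x)
| ev_comp f gs v ys y :
    pevalL o gs v ys -> peval o f ys y -> peval o (PComp f gs) v y
| ev_pr0 f g v y : peval o f v y -> peval o (PPrimRec f g) (0 :: v) y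
| ev_prS f g n v r y :
    peval o (PPrimRec f g) (n :: v) r -> peval o g (n :: r :: v) y ->
    peval o (PPrimRec f g) (S n :: v) y
| ev_mu f v n :
    peval o f (n :: v) 0 ->
    (forall m, m < n -> exists k, peval o f (m :: v) (S k)) ->
    peval o (PMu f) v n
with pevalL (o : nat -> nat) : list prf -> list nat -> list nat -> Prop :=
| evL_nil v : pevalL o [] v []
| evL_cons f fs v y ys :
    peval o f v y -> pevalL o fs v ys -> pevalL o (f :: fs) v (y :: ys).

Definition RecursiveIn (z : nat -> bool) (o : nat -> nat) : Prop :=
  exists e : prf, forall n, peval o e [n] (if z n then 1 else 0).

(* Main.v *)
Require Import Defs.
From Stdlib Require Import Arith List Lia ZArith Classical ClassicalEpsilon FunctionalExtensionality Cantor.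
Import ListNotations.

Inductive sym : Type := SG (h : nat -> nat) | SX (b : bool).

Definition step (p : list (nat*nat)) (t : sym) (a c : nat) : Prop :=
  match t with
  | SG h => c = h a
  | SX true => In (a,c) p
  | SX false => In (c,a) p
  end.

Fixpoint path (p : list (nat*nat)) (l : list sym) (a c : nat) : Prop :=
  match l with
  | [] => c = a
  | t :: l' => exists b, step p t a b /\ path p l' b c
  end.

Definition dom (p : list (nat*nat)) a := exists b, In (a,b) p.
Definition ran (p : list (nat*nat)) b := exists a, In (a,b) p.
Definition Dl (p : list (nat*nat)) : list nat := flat_map (fun '(x,y) => [x;y]) p.
Definition DD p x := In x (Dl p).

Lemma DD_dom p x : dom p x -> DD p x.
Proof. intros [b H]. unfold DD, Dl. apply in_flat_map. exists (x,b). simpl; auto. Qed.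
Lemma DD_ran p x : ran p x -> DD p x.
Proof. intros [b H]. unfold DD, Dl. apply in_flat_map. exists (b,x). simpl; auto. Qed.
Lemma DD_inv p x : DD p x -> dom p x \/ ran p x.
Proof. unfold DD, Dl. intros H. apply in_flat_map in H. destruct H as [[u v] [Hin H]].
  simpl in H. destruct H as [<-|[<-|[]]]. left; exists v; auto. right; exists u; auto. Qed.
Lemma DD_cons e p x : DD (e::p) x <-> x = fst e \/ x = snd e \/ DD p x.
Proof. destruct e as [u v]. unfold DD, Dl; simpl. intuition. Qed.

Definition adjok (t t' : sym) : Prop :=
  match t, t' with
  | SG _, SG _ => False
  | SX b, SX b' => b = b'
  | _, _ => True
  end.

Fixpoint chain (l : list sym) : Prop :=
  match l with
  | t :: ((t' :: _) as l') => adjok t t' /\ chain l'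
  | _ => True
  end.

Definition hasX (l : list sym) := exists b, In (SX b) l.

Definition cycok (l : list sym) : Prop :=
  match l with [] => True | t :: _ => adjok (last l t) t end.

(* conditions for adding an edge with new endpoint m next to n *)
Definition lettersOK (W : list (list sym)) (P : list sym -> Prop) (Q : (nat->nat) -> Prop) :=
  forall w, In w W -> P w -> forall h, In (SG h) w -> Q h.

Definition CmP (P : list sym -> Prop) (p : list (nat*nat)) (W : list (list sym)) (n m : nat) : Prop :=
  ~ DD p m /\ m <> n /\
  lettersOK W P (fun h => ~ DD p (h m) /\ h m <> n /\ h m <> m /\
                          forall b, h b = m -> ~ DD p b /\ b <> n).

Lemma path_app p l1 l2 a c : path p (l1 ++ l2) a c <-> exists b, path p l1 a b /\ path p l2 b c.
Proof.
  revert a; induction l1 as [|t l1 IH]; intros a; simpl.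
  - split. intros H; exists a; auto. intros [b [-> H]]; auto.
  - split.
    + intros [b [Hs Hp]]. apply IH in Hp. destruct Hp as [b' [H1 H2]]. exists b'. split; eauto.
    + intros [b [[b' [Hs Hp]] H2]]. exists b'. split; auto. apply IH. eauto.
Qed.

Lemma step_mono p q t a c : incl p q -> step p t a c -> step q t a c.
Proof. destruct t as [h|[|]]; simpl; auto. Qed.
Lemma path_mono p q l a c : incl p q -> path p l a c -> path q l a c.
Proof. intros Hi; revert a; induction l; simpl; auto. intros a0 [b [H1 H2]]. exists b; split; eauto using step_mono. Qed.

Section Freeze.
Variables (p : list (nat*nat)) (n m : nat).
Hypothesis Hn : ~ dom p n.
Hypothesis Hm : ~ DD p m.
Hypothesis Hmn : m <> n.
Let q := (n,m) :: p.
Definition LC h := ~ DD p (h m) /\ h m <> n /\ h m <> m /\ forall b, h b = m -> ~ DD p b /\ b <> n.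
Definition LCl (l : list sym) := forall h, In (SG h) l -> LC h.

Lemma LCl_cons t l : LCl (t :: l) -> LCl l.
Proof. intros H h Hi. apply H. simpl; auto. Qed.

Lemma after_m l c : chain (SX true :: l) -> LCl l -> path q l m c ->
  (l = [] /\ c = m) \/ (exists h, l = [SG h] /\ c = h m).
Proof.
  intros Hc HL Hp. destruct l as [|t l].
  - simpl in Hp. auto.
  - destruct t as [h|[|]].
    + simpl in Hp. destruct Hp as [b [-> Hp]]. right. exists h.
      destruct l as [|t l].
      * simpl in Hp. subst. auto.
      * exfalso. simpl in Hc. destruct Hc as [_ [Hc _]].
        destruct t as [h'|bb]; [contradiction|].
        destruct (HL h (or_introl eq_refl)) as [H1 [H2 [H3 _]]].
        destruct Hp as [b' [Hs _]]. destruct bb; simpl in Hs; destruct Hs as [E|Hs].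
        -- inversion E; congruence.
        -- apply H1. apply DD_dom. exists b'; exact Hs.
        -- inversion E; congruence.
        -- apply H1. apply DD_ran. exists b'; exact Hs.
    + exfalso. simpl in Hp. destruct Hp as [b [[E|Hs] _]].
      * inversion E; congruence.
      * apply Hm, DD_dom. exists b; exact Hs.
    + exfalso. simpl in Hc. destruct Hc as [Hc _]. discriminate.
Qed.

Lemma claim l : forall a c, chain l -> LCl l -> a <> m ->
  (forall h l', l = SG h :: l' -> h a = m -> l' = []) -> path q l a c ->
  path p l a c \/ exists l1 l2, l = l1 ++ SX true :: l2 /\ path p l1 a n /\
     ((l2 = [] /\ c = m) \/ exists h, l2 = [SG h] /\ c = h m).
Proof.
  induction l as [|t l IH]; intros a c Hc HL Ha Hinv Hp.
  - left; auto.
  - assert (Hc' : chain l) by (destruct l; simpl in *; tauto).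
    destruct t as [h|[|]].
    + simpl in Hp. destruct Hp as [b [-> Hp]].
      destruct (Nat.eq_dec (h a) m) as [E|E].
      * specialize (Hinv h l eq_refl E). subst l. simpl in Hp. left. simpl. exists (h a); auto.
      * assert (Hinv' : forall h0 l', l = SG h0 :: l' -> h0 (h a) = m -> l' = []).
        { intros h0 l' -> _. simpl in Hc. destruct Hc as [[] _]. }
        destruct (IH (h a) c Hc' (LCl_cons _ _ HL) E Hinv' Hp) as [H|[l1 [l2 [-> [H1 H2]]]]].
        -- left. simpl. exists (h a). auto.
        -- right. exists (SG h :: l1), l2. split; auto. split; auto. simpl. exists (h a); auto.
    + simpl in Hp. destruct Hp as [b [[E|Hs] Hp]].
      * inversion E; subst. right. exists [], l. split; auto. split; simpl; auto.
        apply after_m; auto. eapply LCl_cons; eauto.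
      * assert (Hb : b <> m) by (intro; subst; apply Hm, DD_ran; eexists; eauto).
        assert (Hinv' : forall h0 l', l = SG h0 :: l' -> h0 b = m -> l' = []).
        { intros h0 l' -> E. exfalso. destruct (HL h0 (or_intror (or_introl eq_refl))) as [_ [_ [_ H4]]].
          destruct (H4 b E) as [H5 _]. apply H5, DD_ran; eexists; eauto. }
        destruct (IH b c Hc' (LCl_cons _ _ HL) Hb Hinv' Hp) as [H|[l1 [l2 [-> [H1 H2]]]]].
        -- left. simpl. exists b. auto.
        -- right. exists (SX true :: l1), l2. split; auto. split; auto. simpl. exists b; auto.
    + simpl in Hp. destruct Hp as [b [[E|Hs] Hp]].
      * inversion E; subst. congruence.
      * assert (Hb : b <> m) by (intro; subst; apply Hm, DD_dom; eexists; eauto).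
        assert (Hinv' : forall h0 l', l = SG h0 :: l' -> h0 b = m -> l' = []).
        { intros h0 l' -> E. exfalso. destruct (HL h0 (or_intror (or_introl eq_refl))) as [_ [_ [_ H4]]].
          destruct (H4 b E) as [H5 _]. apply H5, DD_dom; eexists; eauto. }
        destruct (IH b c Hc' (LCl_cons _ _ HL) Hb Hinv' Hp) as [H|[l1 [l2 [-> [H1 H2]]]]].
        -- left. simpl. exists b. auto.
        -- right. exists (SX false :: l1), l2. split; auto. split; auto. simpl. exists b; auto.
Qed.
End Freeze.

Lemma chain_mid l1 t1 t2 l2 : chain (l1 ++ t1 :: t2 :: l2) -> adjok t1 t2.
Proof. induction l1 as [|a l1 IH]; simpl. tauto.
  intros H. apply IH. destruct l1; simpl in *; tauto. Qed.

Lemma chain_tail t l : chain (t :: l) -> chain l.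
Proof. destruct l; simpl; tauto. Qed.

Lemma path_snocX p l b x y : path p (l ++ [SX b]) x y -> DD p y.
Proof. intros H. apply path_app in H. destruct H as [u [_ [v [Hs Hv]]]]. simpl in Hv. subst v.
  destruct b; simpl in Hs. apply DD_ran; eexists; eauto. apply DD_dom; eexists; eauto. Qed.

Lemma last_cons_snoc (l : list sym) t d : last (l ++ [t]) d = t.
Proof. apply last_last. Qed.

Lemma last_cons_ne (t t' : sym) l d : last (t :: t' :: l) d = last (t' :: l) d.
Proof. reflexivity. Qed.

Lemma cycok_last t w l1 x : t :: w = l1 ++ [x] -> cycok (t :: w) -> adjok x t.
Proof. intros E H. unfold cycok in H. rewrite E in H at 1. rewrite last_last in H. exact H. Qed.


Lemma list_eq_dec_sym (l : list sym) : {l = []} + {l <> []}.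
Proof. destruct l; [left|right]; congruence. Defined.

Lemma path_end_SG p l x y : chain l -> path p l x y -> l <> [] -> ~ DD p y ->
  exists h l3 y0, l = l3 ++ [SG h] /\ path p l3 x y0 /\ y = h y0 /\ (l3 = [] \/ DD p y0).
Proof.
  intros Hc Hp Hne HD. destruct (exists_last Hne) as [l' [t E]]. subst l.
  destruct t as [h|b].
  - apply path_app in Hp. destruct Hp as [y0 [H1 H2]]. simpl in H2. destruct H2 as [b [Hb ->]].
    exists h, l', y0. repeat split; auto. destruct (list_eq_dec_sym l') as [->|Hne']; auto.
    right. destruct (exists_last Hne') as [l'' [t' E']]. subst l'.
    rewrite <- app_assoc in Hc. simpl in Hc. apply chain_mid in Hc. destruct t'; [contradiction|].
    eapply path_snocX; eauto.
  - exfalso. apply HD. eapply path_snocX; eauto.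
Qed.

Section FixFwd.
Variables (p : list (nat*nat)) (n m : nat).
Hypothesis Hn : ~ dom p n.
Hypothesis Hm : ~ DD p m.
Hypothesis Hmn : m <> n.

Lemma stuck_at x b y : ~ DD p x -> x <> n -> x <> m -> ~ step ((n,m)::p) (SX b) x y.
Proof. intros H1 H2 H3 Hs. destruct b; simpl in Hs; destruct Hs as [E|Hs].
  - inversion E; congruence.
  - apply H1, DD_dom; eexists; eauto.
  - inversion E; congruence.
  - apply H1, DD_ran; eexists; eauto. Qed.

Lemma inv_vacuous l : LCl p n m l -> forall h l', l = SG h :: l' -> h n = m -> l' = [].
Proof. intros HL h l' -> E. exfalso. destruct (HL h (or_introl eq_refl)) as [_ [_ [_ H4]]].
  destruct (H4 n E); auto. Qed.

Lemma fix_fwd w a : chain w -> hasX w -> cycok w -> LCl p n m w ->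
  path ((n,m)::p) w a a -> path p w a a.
Proof.
  intros Hc HX Hcy HL Hp.
  destruct w as [|t w']. { simpl; auto. }
  destruct (Nat.eq_dec a m) as [Eam|Nam].
  -
    subst a. exfalso. pose proof Hp as Hp0. simpl in Hp. destruct Hp as [b [Hs Hp]].
    destruct t as [h|[|]].
    + simpl in Hs. subst b. destruct w' as [|t2 w''].
      * destruct HX as [bx [E|[]]]. discriminate.
      * simpl in Hc. destruct Hc as [Hc _]. destruct t2 as [|b2]; [contradiction|].
        destruct Hp as [x [Hs2 _]]. destruct (HL h (or_introl eq_refl)) as [H1 [H2 [H3 _]]].
        eapply stuck_at; eauto.
    + simpl in Hs. destruct Hs as [E|Hs]. inversion E; congruence. apply Hm, DD_dom; eexists; eauto.
    + simpl in Hs. destruct Hs as [E|Hs].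
      2:{ apply Hm, DD_ran; eexists; eauto. }
      inversion E; subst b.
      destruct (claim p n m Hm Hmn w' n m (chain_tail _ _ Hc) (LCl_cons _ _ _ _ _ HL) (not_eq_sym Hmn)
                (inv_vacuous _ (LCl_cons _ _ _ _ _ HL)) Hp) as [Hp'|[l1 [l2 [E1 [H1 H2]]]]].
      * destruct w' as [|t2 w''].
        { simpl in Hp'. congruence. }
        destruct (path_end_SG p _ _ _ (chain_tail _ _ Hc) Hp' ltac:(discriminate) Hm)
          as [h [l3 [y0 [E3 [H3 [H4 H5]]]]]].
        assert (Hh : LC p n m h). { apply HL. right. rewrite E3. apply in_or_app. right; simpl; auto. }
        destruct Hh as [_ [_ [_ Hpre]]]. destruct (Hpre y0 (eq_sym H4)) as [Hy1 Hy2].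
        destruct H5 as [->|H5]. simpl in H3. congruence. contradiction.
      * destruct H2 as [[-> _]|[h [-> E2]]].
        -- pose proof (cycok_last (SX false) w' (SX false :: l1) (SX true) ltac:(rewrite E1; reflexivity) Hcy) as Ha. simpl in Ha. discriminate.
        -- destruct (HL h) as [_ [_ [H3 _]]]. right. rewrite E1. apply in_or_app. right. simpl; auto.
           congruence.
  - destruct t as [h|b0].
    + destruct (Nat.eq_dec (h a) m) as [E|E].
      *
        exfalso. simpl in Hp. destruct Hp as [b [-> Hp]]. rewrite E in Hp.
        destruct w' as [|t2 w''].
        { destruct HX as [bx [E'|[]]]. discriminate. }
        simpl in Hc. destruct Hc as [Hc1 Hc2]. destruct t2 as [|b2]; [contradiction|].
        destruct Hp as [x [Hs Hp]].
        destruct (HL h (or_introl eq_refl)) as [_ [_ [Hhm Hpre]]].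
        destruct (Hpre a E) as [HaD Han].
        destruct b2; simpl in Hs; destruct Hs as [E2|Hs].
        -- inversion E2; congruence.
        -- apply Hm, DD_dom; eexists; eauto.
        -- inversion E2; subst x.
           assert (HL' : LCl p n m w'') by (intros h' Hi; apply HL; simpl; auto).
           destruct (claim p n m Hm Hmn w'' n a (chain_tail _ _ Hc2) HL' (not_eq_sym Hmn)
                (inv_vacuous _ HL') Hp) as [Hp'|[l1 [l2 [E1 [H1 H2]]]]].
           ++ destruct w'' as [|t3 w3].
              { simpl in Hp'. subst a. apply Han; auto. }
              destruct (path_end_SG p _ _ _ (proj2 Hc2) Hp' ltac:(discriminate) HaD)
                as [h' [l3 [y0 [E3 _]]]].
              assert (Hcy' := cycok_last (SG h) (SX false :: t3 :: w3) (SG h :: SX false :: l3) (SG h')).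
              simpl in Hcy'. rewrite E3 in Hcy'. specialize (Hcy' eq_refl Hcy). exact Hcy'.
           ++ destruct H2 as [[-> ->]|[h' [-> E2']]].
              ** apply Hhm. exact E.
              ** exact (cycok_last (SG h) (SX false :: w'') (SG h :: SX false :: l1 ++ [SX true]) (SG h')
                   ltac:(rewrite E1; simpl; rewrite <- app_assoc; reflexivity) Hcy).
        -- apply Hm, DD_ran; eexists; eauto.
      *
        assert (Hinv : forall h0 l', SG h :: w' = SG h0 :: l' -> h0 a = m -> l' = []).
        { intros h0 l' E' E''. inversion E'; subst. congruence. }
        destruct (claim p n m Hm Hmn (SG h :: w') a a Hc HL Nam Hinv Hp) as [H|[l1 [l2 [E1 [H1 H2]]]]]; auto.
        exfalso. destruct H2 as [[_ ->]|[h' [-> E2]]]. congruence.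
        pose proof (cycok_last _ _ (l1 ++ [SX true]) (SG h') ltac:(rewrite E1, <- app_assoc; reflexivity) Hcy). contradiction.
    +
      assert (Hinv : forall h0 l', SX b0 :: w' = SG h0 :: l' -> h0 a = m -> l' = []).
      { intros h0 l' E'. discriminate. }
      destruct (claim p n m Hm Hmn (SX b0 :: w') a a Hc HL Nam Hinv Hp) as [H|[l1 [l2 [E1 [H1 H2]]]]]; auto.
      exfalso. destruct H2 as [[_ ->]|[h' [-> E2]]]. congruence.
      destruct (HL h') as [Hd [Hn' [Hmm _]]]. rewrite E1. apply in_or_app; right; simpl; auto.
      simpl in Hp. destruct Hp as [x [Hs _]]. rewrite E2 in Hs. eapply stuck_at; eauto.
Qed.
End FixFwd.

Definition flip (p : list (nat*nat)) := map (fun '(x,y) => (y,x)) p.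
Definition flips (t : sym) := match t with SG h => SG h | SX b => SX (negb b) end.
Definition flipw (w : list sym) := map flips w.

Lemma in_flip p x y : In (x,y) (flip p) <-> In (y,x) p.
Proof. unfold flip. rewrite in_map_iff. split.
  - intros [[u v] [E H]]. inversion E; subst; auto.
  - intros H. exists (y,x); auto. Qed.

Lemma DD_flip p x : DD (flip p) x <-> DD p x.
Proof. split; intros H; apply DD_inv in H; destruct H as [[b H]|[b H]].
  - apply DD_ran. exists b. apply in_flip; auto.
  - apply DD_dom. exists b. apply in_flip; auto.
  - apply DD_ran. exists b. apply in_flip in H; auto.
  - apply DD_dom. exists b. apply in_flip in H; auto.
Qed.

Lemma path_flip p w a c : path (flip p) (flipw w) a c <-> path p w a c.
Proof. revert a; induction w as [|t w IH]; intros a; simpl. tauto.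
  split; intros [b [Hs Hp]]; exists b; split; try (apply IH; auto).
  - destruct t as [h|[|]]; cbn [step flips negb] in *; auto; apply (proj1 (in_flip _ _ _)) in Hs; auto.
  - destruct t as [h|[|]]; cbn [step flips negb] in *; auto; apply (proj2 (in_flip _ _ _)); auto.
Qed.

Lemma adjok_flip t t' : adjok (flips t) (flips t') <-> adjok t t'.
Proof. destruct t, t'; simpl; try tauto. destruct b, b0; simpl; split; congruence. Qed.

Lemma chain_flip w : chain (flipw w) <-> chain w.
Proof. induction w as [|t w IH]; simpl. tauto. destruct w as [|t' w]; simpl. tauto.
  simpl in IH. rewrite adjok_flip. tauto. Qed.

Lemma hasX_flip w : hasX w -> hasX (flipw w).
Proof. intros [b H]. exists (negb b). unfold flipw. change (SX (negb b)) with (flips (SX b)). apply in_map; auto. Qed.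

Lemma last_map_sym (f : sym -> sym) l d : last (map f l) (f d) = f (last l d).
Proof. induction l as [|a l IH]; simpl; auto. destruct l; simpl in *; auto. Qed.

Lemma cycok_flip w : cycok w -> cycok (flipw w).
Proof. destruct w as [|t w]; simpl; auto. intros H.
  change (adjok (last (map flips (t :: w)) (flips t)) (flips t)).
  rewrite last_map_sym. apply adjok_flip. exact H. Qed.

Lemma in_flipw h w : In (SG h) (flipw w) -> In (SG h) w.
Proof. unfold flipw. rewrite in_map_iff. intros [t [E H]]. destruct t; simpl in E; inversion E; subst; auto. Qed.

Definition CR (w : list sym) := chain w /\ hasX w /\ cycok w.

Definition Cm (P : list sym -> Prop) (p : list (nat*nat)) (W : list (list sym)) (n m : nat) : Prop :=
  ~ DD p m /\ m <> n /\ forall w, In w W -> P w -> forall h, In (SG h) w -> LC p n m h.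

Lemma LC_flip p n m h : LC p n m h -> LC (flip p) n m h.
Proof. unfold LC. intros [H1 [H2 [H3 H4]]]. repeat split; auto.
  rewrite DD_flip; auto. rewrite DD_flip. apply H4; auto. apply H4; auto. Qed.

Definition free (b : bool) (a : nat) (p : list (nat*nat)) : Prop :=
  if b then ~ dom p a else ~ ran p a.
Definition edge (b : bool) (a m : nat) : nat*nat := if b then (a,m) else (m,a).

Lemma safe_edge (P : list sym -> Prop) (HP : forall w, P w -> CR w) p W b a m :
  free b a p -> Cm P p W a m -> forall w, In w W -> P w -> forall x,
  path (edge b a m :: p) w x x -> path p w x x.
Proof.
  intros Hf [Hm [Hma HL]] w Hw Pw x Hp. destruct (HP w Pw) as [Hc [HX Hcy]].
  destruct b; simpl in *.
  - eapply fix_fwd; eauto. intros h Hi. apply (HL w Hw Pw h Hi).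
  - apply (proj1 (path_flip p w x x)). apply (proj2 (path_flip ((m,a)::p) w x x)) in Hp.
    change (flip ((m,a)::p)) with ((a,m) :: flip p) in Hp.
    eapply (fix_fwd (flip p) a m).
    + rewrite DD_flip; auto.
    + auto.
    + apply chain_flip; auto.
    + apply hasX_flip; auto.
    + apply cycok_flip; auto.
    + intros h Hi. apply LC_flip. apply (HL w Hw Pw h). apply in_flipw; auto.
    + exact Hp.
Qed.

Definition PInj (p : list (nat*nat)) :=
  (forall a b c, In (a,b) p -> In (a,c) p -> b = c) /\
  (forall a b c, In (a,c) p -> In (b,c) p -> a = b).

Inductive ext (P : list sym -> Prop) (W : list (list sym)) (p : list (nat*nat)) : list (nat*nat) -> Prop :=
| ext_refl : ext P W p p
| ext_edge q b a m : ext P W p q -> free b a q -> Cm P q W a m -> ext P W p (edge b a m :: q).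

Lemma ext_incl P W p q : ext P W p q -> incl p q.
Proof. induction 1. apply incl_refl. apply incl_tl; auto. Qed.

Lemma ext_trans P W p q r : ext P W p q -> ext P W q r -> ext P W p r.
Proof. intros H1 H2. induction H2; auto. econstructor; eauto. Qed.

Lemma ext_PInj P W p q : ext P W p q -> PInj p -> PInj q.
Proof.
  induction 1 as [|q b a m H IH Hf Hc]; auto. intros Hp. specialize (IH Hp).
  destruct IH as [I1 I2]. destruct Hc as [Hm _].
  destruct b; simpl in *; split; intros x y z H1 H2; simpl in H1, H2.
  - destruct H1 as [E1|H1]; destruct H2 as [E2|H2].
    + inversion E1; inversion E2; congruence.
    + inversion E1; subst. exfalso; apply Hf; eexists; eauto.
    + inversion E2; subst. exfalso; apply Hf; eexists; eauto.
    + eauto.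
  - destruct H1 as [E1|H1]; destruct H2 as [E2|H2].
    + inversion E1; inversion E2; congruence.
    + inversion E1; subst. exfalso; apply Hm, DD_ran; eexists; eauto.
    + inversion E2; subst. exfalso; apply Hm, DD_ran; eexists; eauto.
    + eauto.
  - destruct H1 as [E1|H1]; destruct H2 as [E2|H2].
    + inversion E1; inversion E2; congruence.
    + inversion E1; subst. exfalso; apply Hm, DD_dom; eexists; eauto.
    + inversion E2; subst. exfalso; apply Hm, DD_dom; eexists; eauto.
    + eauto.
  - destruct H1 as [E1|H1]; destruct H2 as [E2|H2].
    + inversion E1; inversion E2; congruence.
    + inversion E1; subst. exfalso; apply Hf; eexists; eauto.
    + inversion E2; subst. exfalso; apply Hf; eexists; eauto.
    + eauto.
Qed.

Lemma ext_fix P (HP : forall w, P w -> CR w) W p q : ext P W p q ->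
  forall w, In w W -> P w -> forall x, path q w x x -> path p w x x.
Proof. induction 1 as [|q b a m H IH Hf Hc]; auto.
  intros w Hw Pw x Hp. apply IH; auto. eapply safe_edge; eauto. Qed.

Lemma ext_W P W W' p q : ext P W p q -> (forall w, In w W' -> P w -> In w W) -> ext P W' p q.
Proof. induction 1 as [|q b a m H IH Hf Hc]; intros HW. constructor.
  econstructor; eauto. destruct Hc as [H1 [H2 H3]]. split; auto. split; auto.
  intros w Hw Pw. apply H3; auto. Qed.

Definition cofin (P : nat -> Prop) := exists B, forall m, B <= m -> P m.

Lemma cofin_and P Q : cofin P -> cofin Q -> cofin (fun m => P m /\ Q m).
Proof. intros [B1 H1] [B2 H2]. exists (B1 + B2). intros m Hm. split; [apply H1|apply H2]; lia. Qed.

Lemma cofin_true : cofin (fun _ => True).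
Proof. exists 0; auto. Qed.

Lemma cofin_mono (P Q : nat -> Prop) : (forall m, P m -> Q m) -> cofin P -> cofin Q.
Proof. intros H [B HB]. exists B; auto. Qed.

Lemma cofin_impl (Q : Prop) P : (Q -> cofin P) -> cofin (fun m => Q -> P m).
Proof. intros H. destruct (classic Q) as [q|nq].
  - destruct (H q) as [B HB]. exists B; auto.
  - exists 0. intros; contradiction. Qed.

Lemma cofin_all {A} (L : list A) (P : A -> nat -> Prop) :
  (forall x, In x L -> cofin (P x)) -> cofin (fun m => forall x, In x L -> P x m).
Proof. induction L as [|a L IH]; intros H.
  - exists 0. intros m _ x [].
  - destruct (H a (or_introl eq_refl)) as [B1 H1].
    destruct IH as [B2 H2]. intros x Hx; apply H; simpl; auto.
    exists (B1 + B2). intros m Hm x [<-|Hx]. apply H1; lia. apply H2; auto; lia. Qed.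

Lemma cofin_all_prop (P : Prop) (Q : nat -> Prop) : cofin Q -> cofin (fun m => P -> Q m).
Proof. intros [B H]; exists B; auto. Qed.

Lemma cofin_neq_inj (f : nat -> nat) (Hf : forall x y, f x = f y -> x = y) y :
  cofin (fun m => f m <> y).
Proof. destruct (classic (exists m, f m = y)) as [[m0 E]|N].
  - exists (S m0). intros m Hm E'. assert (m = m0) by (apply Hf; congruence). lia.
  - exists 0. intros m _ E. apply N; eauto. Qed.

Lemma cofin_notin_inj (f : nat -> nat) (Hf : forall x y, f x = f y -> x = y) L :
  cofin (fun m => ~ In (f m) L).
Proof. induction L as [|y L IH]. exists 0; auto.
  destruct IH as [B1 H1]. destruct (cofin_neq_inj f Hf y) as [B2 H2].
  exists (B1 + B2). intros m Hm [E|Hi]. apply (H2 m); [lia|auto]. apply (H1 m); [lia|auto]. Qed.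

Lemma cofin_notin L : cofin (fun m => ~ In m L).
Proof. apply (cofin_notin_inj (fun x => x)); auto. Qed.

Lemma cofin_neq y : cofin (fun m => m <> y).
Proof. apply (cofin_neq_inj (fun x => x)); auto. Qed.

Lemma cofin_nofix (f : nat -> nat) : (exists N, forall n, f n = n -> n < N) -> cofin (fun m => f m <> m).
Proof. intros [N H]. exists N. intros m Hm E. specialize (H m E). lia. Qed.

Lemma cofin_ge s : cofin (fun m => s <= m).
Proof. exists s; auto. Qed.

Lemma cofin_pick P B : cofin P -> exists m, B <= m /\ P m.
Proof. intros [B' H]. exists (B + B'). split. lia. apply H; lia. Qed.

Lemma NoDup_map_inj (f : nat -> nat) l : (forall x y, In x l -> In y l -> f x = f y -> x = y) -> NoDup l -> NoDup (map f l).
Proof. induction l as [|a l IH]; intros Hf Hn; simpl. constructor.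
  inversion Hn; subst. constructor.
  - intros Hi. apply in_map_iff in Hi. destruct Hi as [x [E Hx]].
    assert (x = a) by (apply Hf; simpl; auto). subst; contradiction.
  - apply IH; auto. intros; apply Hf; simpl; auto. Qed.

Lemma parity_exists (k kinv : nat -> nat) (Hk : forall y, k (kinv y) = y) b B :
  exists m, B <= m /\ Nat.odd (k m) = b.
Proof.
  set (Y := map (fun t => 2*t + (if b then 1 else 0)) (seq 0 (S B))).
  set (M := map kinv Y).
  assert (HY : NoDup Y). { apply NoDup_map_inj. intros x y _ _ E. destruct b; lia. apply seq_NoDup. }
  assert (HM : NoDup M). { apply NoDup_map_inj; auto. intros x y _ _ E. rewrite <- (Hk x), <- (Hk y). congruence. }
  destruct (classic (exists m, In m M /\ B <= m)) as [[m [Hm HB]]|N].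
  - exists m. split; auto. unfold M in Hm. apply in_map_iff in Hm. destruct Hm as [y [<- Hy]].
    rewrite Hk. unfold Y in Hy. apply in_map_iff in Hy. destruct Hy as [t [<- _]].
    destruct b. apply Nat.odd_odd. rewrite Nat.add_0_r. apply Nat.odd_even.
  - exfalso. assert (Hi : incl M (seq 0 B)).
    { intros m Hm. apply in_seq. split. lia. destruct (Nat.lt_ge_cases m B); auto. exfalso; apply N; eauto. }
    apply NoDup_incl_length in Hi; auto. unfold M, Y in Hi. rewrite !length_map, !length_seq in Hi. lia.
Qed.

Lemma dlemma (k kinv h1 : nat -> nat) (Hk : forall y, k (kinv y) = y)
  (Hki : forall x y, k x = k y -> x = y) (Hh : forall x y, h1 x = h1 y -> x = y) b :
  exists d, 1 <= d /\ forall B, exists m, B <= m /\ Nat.odd (k m) = b /\ k m + d <> m /\ h1 (k m + d) <> m.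
Proof.
  apply NNPP. intros N.
  assert (Hd : forall d, 1 <= d -> exists B, forall m, B <= m -> Nat.odd (k m) = b -> k m + d = m \/ h1 (k m + d) = m).
  { intros d Hd1. apply NNPP. intros N2. apply N. exists d. split; auto. intros B.
    apply NNPP. intros N3. apply N2. exists B. intros m Hm Ho.
    destruct (Nat.eq_dec (k m + d) m) as [E|E]; auto.
    destruct (Nat.eq_dec (h1 (k m + d)) m) as [E'|E']; auto.
    exfalso. apply N3. exists m. auto. }
  destruct (Hd 1 ltac:(lia)) as [B1 H1]. destruct (Hd 2 ltac:(lia)) as [B2 H2]. destruct (Hd 3 ltac:(lia)) as [B3 H3].
  destruct (parity_exists k kinv Hk b (B1+B2+B3)) as [m [Hm Ho]].
  specialize (H1 m ltac:(lia) Ho). specialize (H2 m ltac:(lia) Ho). specialize (H3 m ltac:(lia) Ho).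
  destruct H1 as [E1|E1]; destruct H2 as [E2|E2]; destruct H3 as [E3|E3]; try lia;
  match goal with | A : h1 ?x = m, B : h1 ?y = m |- _ =>
     assert (x = y) by (apply Hh; congruence); lia end.
Qed.

Definition injf (h : nat -> nat) := forall x y, h x = h y -> x = y.
Definition fixb (h : nat -> nat) := exists N, forall n, h n = n -> n < N.
Definition letok (h : nat -> nat) := injf h /\ fixb h.

Definition klast (w : list sym) : nat -> nat :=
  match last w (SX true) with SG h => h | SX _ => fun x => x end.

Lemma DD_edge b a m p x : DD (edge b a m :: p) x <-> x = a \/ x = m \/ DD p x.
Proof. destruct b; simpl; rewrite DD_cons; simpl; tauto. Qed.

Lemma step_edge b a m p : step (edge b a m :: p) (SX b) a m.
Proof. destruct b; simpl; auto. Qed.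

Section Greedy.
Variable P : list sym -> Prop.
Hypothesis HP : forall w, P w -> CR w.
Variable W : list (list sym).
Hypothesis HW : forall w, In w W -> P w -> forall h, In (SG h) w -> letok h.

Lemma cofin_LC p a h : letok h -> cofin (fun m => LC p a m h).
Proof.
  intros [Hi Hf]. unfold LC.
  apply (cofin_mono (fun m => (~ In (h m) (Dl p) /\ h m <> a) /\ (h m <> m /\ ~ In m (map h (a :: Dl p))))).
  - intros m [[H1 H2] [H3 H4]]. split; [exact H1|]. split; [exact H2|]. split; [exact H3|].
    intros b E. split.
    + intro Hb. apply H4. rewrite <- E. apply in_map. right; auto.
    + intro Eb. apply H4. rewrite <- E, Eb. apply in_map. left; auto.
  - apply cofin_and. apply cofin_and. apply cofin_notin_inj; auto. apply cofin_neq_inj; auto.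
    apply cofin_and. apply cofin_nofix; auto. apply cofin_notin.
Qed.

Lemma cofin_Cm p a : cofin (fun m => Cm P p W a m).
Proof.
  unfold Cm. apply cofin_and. apply cofin_notin. apply cofin_and. apply cofin_neq.
  apply (cofin_mono (fun m => forall w, In w W -> P w -> forall t, In t w ->
           match t with SG h => LC p a m h | _ => True end)).
  - intros m H w Hw Pw h Hh. exact (H w Hw Pw (SG h) Hh).
  - apply cofin_all. intros w Hw. apply cofin_impl. intros Pw. apply cofin_all.
    intros [h|b] Ht. apply cofin_LC. eapply HW; eauto. apply cofin_true.
Qed.

Lemma free_after b a m p : ~ DD p m -> m <> a -> free b m (edge b a m :: p).
Proof. intros H1 H2. destruct b; simpl; intros [y Hy]; simpl in Hy; destruct Hy as [E|Hy];
  try (inversion E; congruence). apply H1, DD_dom; exists y; auto. apply H1, DD_ran; exists y; auto. Qed.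

Lemma free_fresh b x p : ~ DD p x -> free b x p.
Proof. intros H. destruct b; simpl; intros [y Hy]; apply H. apply DD_dom; exists y; auto. apply DD_ran; exists y; auto. Qed.

Lemma greedy_last : forall b0 p a, chain (SX b0 :: []) -> True ->
  free b0 a p -> forall (L : list nat) bit d (h1 : nat -> nat), injf h1 ->
  (forall B, exists m, B <= m /\ Nat.odd (klast (SX b0 :: []) m) = bit /\ klast (SX b0 :: []) m + d <> m /\
       h1 (klast (SX b0 :: []) m + d) <> m) ->
  exists q v, ext P W p q /\ path q (SX b0 :: []) a v /\ Nat.odd v = bit /\
    ~ DD q (v + d) /\ ~ In (v + d) L /\ ~ DD q (h1 (v + d)) /\ ~ In (h1 (v + d)) L /\
    (forall x, DD q x -> DD p x \/ x = a \/ ~ In x L).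
Proof.
  intros b0 p a Hc Hl Hf L bit d h1 Hh1 HD.

  assert (Hcf : cofin (fun m => Cm P p W a m /\ ~ In m L /\
     (~ In (m + d) (Dl p) /\ m + d <> a /\ ~ In (m+d) L) /\
     (~ In (h1 (m + d)) (Dl p) /\ h1 (m + d) <> a /\ ~ In (h1 (m+d)) L))).
  { apply cofin_and. apply cofin_Cm. apply cofin_and. apply cofin_notin.
    assert (I1 : injf (fun m => m + d)) by (intros x y; lia).
    assert (I2 : injf (fun m => h1 (m + d))) by (intros x y E; apply Hh1 in E; lia).
    apply cofin_and; repeat apply cofin_and;
      first [apply (cofin_notin_inj _ I1) | apply (cofin_neq_inj _ I1) |
             apply (cofin_notin_inj _ I2) | apply (cofin_neq_inj _ I2)]. }
  destruct Hcf as [B HB]. destruct (HD B) as [m [Hm [Ho [Hd1 Hd2]]]]. cbn in Ho, Hd1, Hd2.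
  destruct (HB m Hm) as [HC [HmL [[A1 [A2 A3]] [B1 [B2 B3]]]]].
  exists (edge b0 a m :: p), m. split; [|split; [|split]].
  + econstructor. constructor. auto. auto.
  + simpl. exists m. split; auto. apply step_edge.
  + auto.
  + rewrite !DD_edge. split; [intros [E|[E|E]]; (congruence || contradiction)|].
    split; [assumption|]. split; [intros [E|[E|E]]; (congruence || contradiction)|].
    split; [assumption|]. intros x Hx. apply DD_edge in Hx. destruct Hx as [E|[E|E]]; subst; auto.
Qed.

Lemma greedy_aux n : forall l, length l <= n -> forall b0 p a, chain (SX b0 :: l) -> (forall h, In (SG h) l -> letok h) ->
  free b0 a p -> forall (L : list nat) bit d (h1 : nat -> nat), injf h1 ->
  (forall B, exists m, B <= m /\ Nat.odd (klast (SX b0 :: l) m) = bit /\ klast (SX b0 :: l) m + d <> m /\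
       h1 (klast (SX b0 :: l) m + d) <> m) ->
  exists q v, ext P W p q /\ path q (SX b0 :: l) a v /\ Nat.odd v = bit /\
    ~ DD q (v + d) /\ ~ In (v + d) L /\ ~ DD q (h1 (v + d)) /\ ~ In (h1 (v + d)) L /\
    (forall x, DD q x -> DD p x \/ x = a \/ ~ In x L).
Proof.
  induction n as [|n IHn]; intros l Hlen b0 p a Hc Hl Hf L bit d h1 Hh1 HD;
  (destruct l as [|t l]; [apply greedy_last; auto|simpl in Hlen; try lia]).
  - destruct t as [h|b1].
    + destruct l as [|t2 l].
      *
        assert (Hh : letok h) by (apply Hl; simpl; auto). destruct Hh as [Hhi Hhf].
        assert (Hcf : cofin (fun m => Cm P p W a m /\ ~ In m L /\
           (~ In (h m + d) (Dl p) /\ h m + d <> a /\ ~ In (h m+d) L) /\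
           (~ In (h1 (h m + d)) (Dl p) /\ h1 (h m + d) <> a /\ ~ In (h1 (h m+d)) L))).
        { apply cofin_and. apply cofin_Cm. apply cofin_and. apply cofin_notin.
          assert (I1 : injf (fun m => h m + d)) by (intros x y E; apply Hhi; lia).
          assert (I2 : injf (fun m => h1 (h m + d))) by (intros x y E; apply Hh1 in E; apply Hhi; lia).
          apply cofin_and; repeat apply cofin_and;
            first [apply (cofin_notin_inj _ I1) | apply (cofin_neq_inj _ I1) |
                   apply (cofin_notin_inj _ I2) | apply (cofin_neq_inj _ I2)]. }
        destruct Hcf as [B HB]. destruct (HD B) as [m [Hm [Ho [Hd1 Hd2]]]]. cbn in Ho, Hd1, Hd2.
        destruct (HB m Hm) as [HC [HmL [[A1 [A2 A3]] [B1 [B2 B3]]]]].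
        exists (edge b0 a m :: p), (h m). split; [|split; [|split]].
        -- econstructor. constructor. auto. auto.
        -- simpl. exists m. split. apply step_edge. exists (h m). simpl; auto.
        -- auto.
        -- rewrite !DD_edge. split; [intros [E|[E|E]]; (congruence || contradiction)|].
      split; [assumption|]. split; [intros [E|[E|E]]; (congruence || contradiction)|].
      split; [assumption|]. intros x Hx. apply DD_edge in Hx. destruct Hx as [E|[E|E]]; subst; auto.
      * destruct t2 as [h'|b1].
        { simpl in Hc. destruct Hc as [_ [[] _]]. }
        assert (Hh : letok h) by (apply Hl; simpl; auto). destruct Hh as [Hhi Hhf].
        assert (Hcf : cofin (fun m => Cm P p W a m /\ ~ In m L /\
           ~ In (h m) (Dl p) /\ h m <> a /\ h m <> m /\ ~ In (h m) L)).
        { apply cofin_and. apply cofin_Cm. apply cofin_and. apply cofin_notin.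
          apply cofin_and. apply cofin_notin_inj; auto. apply cofin_and. apply cofin_neq_inj; auto.
          apply cofin_and. apply cofin_nofix; auto. apply cofin_notin_inj; auto. }
        destruct Hcf as [B _HB]. destruct (_HB B (le_n B)) as [HC [HmL [A1 [A2 [A3 A4]]]]].
        set (m := B) in *.
        set (q1 := edge b0 a m :: p).
        assert (Hfr : free b1 (h m) q1).
        { apply free_fresh. unfold q1. rewrite DD_edge. intros [E|[E|E]]; congruence || contradiction. }
        destruct (IHn l ltac:(simpl in Hlen; lia) b1 q1 (h m) (chain_tail _ _ (chain_tail _ _ Hc)) (fun h0 Hi => Hl h0 (or_intror (or_intror Hi))) Hfr L bit d h1 Hh1)
          as [q [v [He [Hp [Ho [X1 [X2 [X3 [X4 X5]]]]]]]]].
        { intros B0. destruct (HD B0) as [m0 H0]. exists m0. unfold klast in *. simpl in H0 |- *. exact H0. }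
        exists q, v. split; [|split; [|split]].
        -- eapply ext_trans; [|exact He]. econstructor. constructor. auto. auto.
        -- cbn [path]. exists m. split. eapply step_mono. eapply ext_incl; exact He. apply step_edge. exists (h m). split. reflexivity. exact Hp.
        -- auto.
        -- repeat split; auto. intros x Hx. destruct (X5 x Hx) as [Y|[Y|Y]];
             [unfold q1 in Y; rewrite DD_edge in Y; destruct Y as [Y|[Y|Y]]|..]; subst; first [tauto | right; left; reflexivity].
    +
      assert (b1 = b0) by (simpl in Hc; destruct Hc as [Hc _]; auto). subst b1.
      assert (Hcf : cofin (fun m => Cm P p W a m /\ ~ In m L)).
      { apply cofin_and. apply cofin_Cm. apply cofin_notin. }
      destruct Hcf as [B HB]. destruct (HB B (le_n B)) as [HC HmL]. set (m := B) in *.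
      set (q1 := edge b0 a m :: p).
      assert (Hfr : free b0 m q1). { apply free_after. apply HC. apply HC. }
      destruct (IHn l ltac:(lia) b0 q1 m (chain_tail _ _ Hc) (fun h0 Hi => Hl h0 (or_intror Hi)) Hfr L bit d h1 Hh1)
        as [q [v [He [Hp [Ho [X1 [X2 [X3 [X4 X5]]]]]]]]].
      { intros B0. destruct (HD B0) as [m0 H0]. exists m0. unfold klast in *.
        destruct l; simpl in H0 |- *; exact H0. }
      exists q, v. split; [|split; [|split]].
      -- eapply ext_trans; [|exact He]. econstructor. constructor. auto. auto.
      -- cbn [path]. exists m. split. eapply step_mono. eapply ext_incl; exact He. apply step_edge. exact Hp.
      -- auto.
      -- repeat split; auto. intros x Hx. destruct (X5 x Hx) as [Y|[Y|Y]];
             [unfold q1 in Y; rewrite DD_edge in Y; destruct Y as [Y|[Y|Y]]|..]; subst; first [tauto | right; left; reflexivity].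
Qed.
End Greedy.

Definition tev (g gi : nat -> nat) (t : sym) : nat -> nat :=
  match t with SG h => h | SX true => g | SX false => gi end.
Fixpoint ev (g gi : nat -> nat) (l : list sym) (a : nat) : nat :=
  match l with [] => a | t :: l' => ev g gi l' (tev g gi t a) end.

Lemma ev_app g gi l1 l2 a : ev g gi (l1 ++ l2) a = ev g gi l2 (ev g gi l1 a).
Proof. revert a; induction l1; simpl; auto. Qed.

Definition lval (G : (nat -> nat) -> Prop) (t : sym) : Prop :=
  match t with SG h => G h /\ exists n, h n <> n | SX _ => True end.
Definition gval (G : (nat -> nat) -> Prop) (t : sym) : Prop :=
  match t with SG h => G h | SX _ => True end.
Definition Red G (l : list sym) := Forall (lval G) l /\ chain l.

Section Norm.
Variable G : (nat -> nat) -> Prop.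
Hypothesis HGsub : IsSubgroup G.
Variables g gi : nat -> nat.
Hypothesis Hg1 : forall n, g (gi n) = n.
Hypothesis Hg2 : forall n, gi (g n) = n.

Lemma Red_tail t l : Red G (t :: l) -> Red G l.
Proof. intros [H1 H2]. inversion H1; subst. split; auto. eapply chain_tail; eauto. Qed.

Lemma cons_red t l : gval G t -> Red G l -> exists l', Red G l' /\ forall a, ev g gi l' a = ev g gi (t :: l) a.
Proof.
  intros Ht Hl. destruct t as [h|b].
  - destruct (classic (exists n, h n <> n)) as [Hn|Hn].
    + destruct l as [|t2 l].
      * exists [SG h]. split; auto. split; simpl; auto. constructor; simpl; auto.
      * destruct t2 as [h2|b2].
        --
           destruct HGsub as [_ [_ [Hc _]]].
           assert (Gk : G (fun n => h2 (h n))).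
           { apply Hc; auto. destruct Hl as [Hl _]. inversion Hl; subst. simpl in *. tauto. }
           destruct (classic (exists n, h2 (h n) <> n)) as [Hk|Hk].
           ++ exists (SG (fun n => h2 (h n)) :: l). split.
              ** destruct Hl as [Hl1 Hl2]. inversion Hl1; subst. split. constructor; simpl; auto.
                 destruct l as [|t3 l]; simpl in *; auto.
              ** intros a; simpl; auto.
           ++ exists l. split. eapply Red_tail; eauto. intros a. simpl.
              f_equal. destruct (classic (h2 (h a) = a)); auto. exfalso; apply Hk; eauto.
        -- exists (SG h :: SX b2 :: l). split; auto. destruct Hl as [Hl1 Hl2]. split.
           constructor; simpl; auto. simpl in *. auto.
    + exists l. split; auto. intros a. simpl. f_equal. destruct (classic (h a = a)); auto.
      exfalso; apply Hn; eauto.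
  - destruct l as [|t2 l].
    + exists [SX b]. split. split; simpl; auto. auto.
    + destruct t2 as [h2|b2].
      * exists (SX b :: SG h2 :: l). split; auto. destruct Hl as [Hl1 Hl2]. split. constructor; simpl; auto.
        simpl in *. auto.
      * destruct (Bool.bool_dec b b2) as [<-|Hb].
        -- exists (SX b :: SX b :: l). split; auto. destruct Hl as [Hl1 Hl2]. split. constructor; simpl; auto.
           simpl in *. auto.
        -- exists l. split. eapply Red_tail; eauto. intros a. simpl.
           destruct b, b2; try congruence; simpl; rewrite ?Hg1, ?Hg2; auto.
Qed.

Lemma norm l : Forall (gval G) l -> exists l', Red G l' /\ forall a, ev g gi l' a = ev g gi l a.
Proof.
  induction l as [|t l IH]; intros H.
  - exists []. split. split; simpl; auto. auto.
  - inversion H; subst. destruct (IH H3) as [l1 [R1 E1]].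
    destruct (cons_red t l1 H2 R1) as [l2 [R2 E2]]. exists l2. split; auto.
    intros a. rewrite E2. simpl. auto.
Qed.

Lemma inv_word l : Forall (gval G) l -> exists l', Forall (gval G) l' /\
  forall a, ev g gi l' (ev g gi l a) = a /\ ev g gi l (ev g gi l' a) = a.
Proof.
  induction l as [|t l IH]; intros H.
  - exists []. simpl; auto.
  - inversion H; subst. destruct (IH H3) as [l1 [F1 E1]].
    assert (Ht : exists t', gval G t' /\ forall a, tev g gi t' (tev g gi t a) = a /\ tev g gi t (tev g gi t' a) = a).
    { destruct t as [h|b].
      - destruct HGsub as [Hb [_ [_ Hi]]]. destruct (Hb h H2) as [hi [E1' E2']].
        exists (SG hi). simpl. split; [|auto]. apply (Hi h hi); auto.
      - exists (SX (negb b)). destruct b; simpl; auto. }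
    destruct Ht as [t' [Ht1 Ht2]].
    exists (l1 ++ [t']). split. apply Forall_app; auto.
    intros a. rewrite !ev_app. simpl. split.
    + rewrite (proj1 (E1 _)). apply Ht2.
    + rewrite (proj2 (Ht2 _)). apply E1.
Qed.

Lemma gen_word f : genWith G g f -> exists l, Red G l /\ forall a, f a = ev g gi l a.
Proof.
  induction 1 as [f [Hf|Hf]| |f h _ [l1 [R1 E1]] _ [l2 [R2 E2]]|f h _ [l1 [R1 E1]] Hfh Hhf].
  - destruct (norm [SG f] ltac:(constructor; simpl; auto)) as [l [R E]].
    exists l; split; [exact R|intros a; rewrite E; reflexivity].
  - subst. exists [SX true]. split. split; simpl; auto. repeat constructor. auto.
  - exists []. split. split; simpl; auto. auto.
  - destruct (norm (l2 ++ l1)) as [l [R E]].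
    { apply Forall_app. split; [eapply Forall_impl; [|apply (proj1 R2)]|eapply Forall_impl; [|apply (proj1 R1)]];
      intros [|] ; simpl; tauto. }
    exists l. split; auto. intros a. rewrite E, ev_app, E2, E1. reflexivity.
  - destruct (inv_word l1) as [l' [F' E']].
    { eapply Forall_impl; [|apply (proj1 R1)]. intros [|]; simpl; tauto. }
    destruct (norm l' F') as [l [R E]]. exists l. split; auto. intros a. rewrite E.
    assert (Hinj : forall x y, f x = f y -> x = y).
    { intros x y Hxy. rewrite <- (Hhf x), <- (Hhf y). congruence. }
    apply Hinj. rewrite Hfh. rewrite E1. symmetry. apply E'.
Qed.
End Norm.

Lemma fixb_conj (F f u : nat -> nat) : injf u -> fixb f -> (forall a, F a = a -> f (u a) = u a) -> fixb F.
Proof. intros Hu [N HN] H. destruct (cofin_notin_inj u Hu (seq 0 N)) as [B HB].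
  exists B. intros a Ha. destruct (Nat.lt_ge_cases a B); auto. exfalso.
  apply (HB a H0). apply in_seq. specialize (HN _ (H a Ha)). lia. Qed.

Lemma noX_short G l : Red G l -> ~ hasX l -> l = [] \/ exists h, l = [SG h] /\ G h /\ exists n, h n <> n.
Proof. intros [H1 H2] HX. destruct l as [|t l]; auto. right.
  destruct t as [h|b]; [|exfalso; apply HX; exists b; simpl; auto].
  destruct l as [|t2 l]. inversion H1; subst. exists h; simpl in *; auto.
  destruct t2 as [h2|b2]. simpl in H2; tauto. exfalso; apply HX; exists b2; simpl; auto. Qed.

Lemma chain_snoc l t : chain l -> (l = [] \/ adjok (last l t) t) -> chain (l ++ [t]).
Proof. induction l as [|a l IH]; simpl; auto. intros Hc Hl. destruct l as [|b l].
  - simpl. destruct Hl as [E|E]; [discriminate|]. split; auto.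
  - simpl in *. split; [tauto|]. apply IH. tauto. right. destruct Hl as [E|E]; [discriminate|auto]. Qed.

Lemma chain_app_l l1 l2 : chain (l1 ++ l2) -> chain l1.
Proof. induction l1 as [|a l1 IH]; simpl; auto. destruct l1 as [|b l1]; simpl in *; auto. tauto. Qed.

Lemma chain_app_r l1 l2 : chain (l1 ++ l2) -> chain l2.
Proof. induction l1 as [|a l1 IH]; simpl; auto. intros H. apply IH. destruct (l1 ++ l2); simpl in *; tauto. Qed.

Lemma last_def (l : list sym) : forall t d d', last (t :: l) d = last (t :: l) d'.
Proof. induction l as [|x l IH]; intros t d d'; [reflexivity|].
  change (last (t :: x :: l) d) with (last (x :: l) d).
  change (last (t :: x :: l) d') with (last (x :: l) d'). apply IH. Qed.

Section Reduce.
Variable G : (nat -> nat) -> Prop.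
Hypothesis HGsub : IsSubgroup G.
Hypothesis HGcof : Cofinitary G.
Variables g gi : nat -> nat.
Hypothesis Hg1 : forall n, g (gi n) = n.
Hypothesis Hg2 : forall n, gi (g n) = n.
Hypothesis Hcr : forall l, Red G l -> CR l -> fixb (ev g gi l).

Lemma Ginj h : G h -> injf h.
Proof. intros Gh x y E. destruct HGsub as [Hb _]. destruct (Hb h Gh) as [hi [_ H2]].
  rewrite <- (H2 x), <- (H2 y). congruence. Qed.

Lemma Gfixb h : G h -> (exists n, h n <> n) -> fixb h.
Proof. intros Gh Hn. apply HGcof; auto. Qed.

Lemma fix_reduce n : forall l, length l <= n -> Red G l -> hasX l -> fixb (ev g gi l).
Proof.
  induction n as [|n IH]; intros l Hlen HR HX.
  { destruct l; simpl in Hlen; [destruct HX as [? []]|lia]. }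
  destruct (classic (cycok l)) as [Hcy|Hcy].
  { apply Hcr; auto. split; [apply HR|]. split; auto. }
  destruct l as [|t l1]. { simpl in Hcy; tauto. }
  destruct (list_eq_dec_sym l1) as [->|Hne].
  { exfalso. apply Hcy. simpl. destruct t as [h|b]; simpl; auto.
    destruct HX as [b [E|[]]]; discriminate. }
  destruct (exists_last Hne) as [l0 [t' E]]. subst l1.
  assert (Hlast : last (t :: l0 ++ [t']) t = t').
  { change (t :: l0 ++ [t']) with ((t :: l0) ++ [t']). apply last_last. }
  unfold cycok in Hcy. rewrite Hlast in Hcy.
  destruct HR as [HF HC].
  assert (HF0 : Forall (lval G) l0).
  { inversion HF; subst. apply Forall_app in H2. tauto. }
  assert (HC0 : chain l0).
  { apply chain_tail in HC. eapply chain_app_l; eauto. }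
  assert (Hlen1 : length l0 + 2 <= S n).
  { simpl in Hlen. rewrite length_app in Hlen. simpl in Hlen. lia. }
  assert (Hlen0 : length l0 <= n) by lia.
  destruct t as [h|b]; destruct t' as [h'|b']; simpl in Hcy.
  -
    assert (Gh : G h /\ exists n, h n <> n) by (inversion HF; auto).
    assert (Gh' : G h' /\ exists n, h n <> n).
    { apply Forall_inv_tail in HF. apply Forall_app in HF. destruct HF as [_ HF]. inversion HF; subst.
      simpl in H1. split; [tauto|apply Gh]. }
    destruct l0 as [|t0 l0'].
    { simpl in HC. tauto. }
    assert (HS : exists b, last (t0 :: l0') (SX true) = SX b).
    { destruct (exists_last (l := t0 :: l0') ltac:(discriminate)) as [l3 [t3 E3]].
      rewrite E3. rewrite last_last. destruct t3 as [h3|b3]; eauto.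
      exfalso. apply chain_tail in HC. rewrite E3 in HC. rewrite <- app_assoc in HC. simpl in HC.
      apply chain_mid in HC. exact HC. }
    assert (HX0 : hasX (t0 :: l0')).
    { destruct HX as [bx Hx]. exists bx. destruct Hx as [E|Hx]; [discriminate|].
      apply in_app_or in Hx. destruct Hx as [Hx|[E|[]]]; auto. discriminate. }
    set (k := fun n => h (h' n)).
    assert (Gk : G k). { destruct HGsub as [_ [_ [Hc _]]]. unfold k. apply Hc; [apply Gh|apply Gh']. }
    assert (Hfix : forall a, ev g gi (SG h :: (t0 :: l0') ++ [SG h']) a = a ->
              ev g gi ((t0 :: l0') ++ [SG k]) (h a) = h a).
    { intros a Ha. rewrite ev_app. simpl in Ha |- *. rewrite ev_app in Ha. simpl in Ha. unfold k. congruence. }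
    destruct (classic (exists n, k n <> n)) as [Hk|Hk].
    + apply (fixb_conj _ (ev g gi ((t0 :: l0') ++ [SG k])) h); [apply Ginj; apply Gh| |exact Hfix].
      apply (IH ((t0 :: l0') ++ [SG k])).
      * rewrite length_app. simpl. simpl in Hlen1. lia.
      * split. apply Forall_app. split; auto. constructor; simpl; auto.
        apply chain_snoc; auto. right. destruct HS as [b Hb].
        replace (last (t0 :: l0') (SG k)) with (SX b). simpl; auto.
        rewrite <- Hb. apply last_def.
      * destruct HX0 as [bx Hx]. exists bx. apply in_or_app; auto.
    + apply (fixb_conj _ (ev g gi (t0 :: l0')) h); [apply Ginj; apply Gh|apply (IH (t0 :: l0')); [simpl in *; lia|split; auto|auto]|].
      intros a Ha. specialize (Hfix a Ha). rewrite ev_app in Hfix. simpl in Hfix.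
      rewrite <- Hfix at 2. destruct (classic (k (ev g gi (t0 :: l0') (h a)) = ev g gi (t0 :: l0') (h a))) as [E|E]; auto.
      exfalso; apply Hk; eauto.
  - contradiction.
  - contradiction.
  -
    assert (Hfix : forall a, ev g gi (SX b :: l0 ++ [SX b']) a = a ->
              ev g gi l0 (tev g gi (SX b) a) = tev g gi (SX b) a).
    { intros a Ha. simpl in Ha. rewrite ev_app in Ha. simpl in Ha.
      destruct b, b'; try congruence; simpl in *; rewrite <- Ha at 2; rewrite ?Hg1, ?Hg2; auto. }
    assert (Hinj : injf (tev g gi (SX b))).
    { intros x y E. destruct b; simpl in E. rewrite <- (Hg2 x), <- (Hg2 y); congruence.
      rewrite <- (Hg1 x), <- (Hg1 y); congruence. }
    apply (fixb_conj _ (ev g gi l0) (tev g gi (SX b))); auto.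
    destruct (classic (hasX l0)) as [HX0|HX0].
    + apply (IH l0 Hlen0); auto. split; auto.
    + destruct (noX_short G l0 (conj HF0 HC0) HX0) as [->|[h0 [-> [G0 N0]]]].
      * exfalso. simpl in HC. destruct HC as [HC _]. simpl in HC. congruence.
      * simpl. apply Gfixb; auto.
Qed.
End Reduce.

Fixpoint tup (len c : nat) : list nat :=
  match len with 0 => [] | S k => let (a, b) := Cantor.of_nat c in a :: tup k b end.
Fixpoint encl (l : list nat) : nat :=
  match l with [] => 0 | a :: l' => Cantor.to_nat (a, encl l') end.
Definition dec_codes (i : nat) : list nat := let (len, c) := Cantor.of_nat i in tup len c.

Lemma tup_S k c : tup (S k) c = fst (Cantor.of_nat c) :: tup k (snd (Cantor.of_nat c)).
Proof. simpl. destruct (Cantor.of_nat c); reflexivity. Qed.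

Lemma tup_encl l : tup (length l) (encl l) = l.
Proof. induction l as [|a l IH]; [reflexivity|].
  change (length (a :: l)) with (S (length l)). rewrite tup_S.
  change (encl (a :: l)) with (Cantor.to_nat (a, encl l)). rewrite Cantor.cancel_of_to. simpl. congruence. Qed.

Lemma dec_codes_surj l : exists i, dec_codes i = l.
Proof. exists (Cantor.to_nat (length l, encl l)). unfold dec_codes. rewrite Cantor.cancel_of_to. apply tup_encl. Qed.

Definition csym (e : nat -> (nat -> nat)) (k : nat) : sym :=
  match k with 0 => SX true | 1 => SX false | S (S k') => SG (e k') end.
Definition decw (e : nat -> (nat -> nat)) (i : nat) : list sym := map (csym e) (dec_codes i).

Lemma decw_surj (G : (nat -> nat) -> Prop) e (He : forall f, G f -> exists k, e k = f) l :
  Forall (gval G) l -> exists i, decw e i = l.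
Proof.
  intros H. assert (Hc : exists cs, map (csym e) cs = l).
  { induction l as [|t l IH]. exists []; auto. inversion H; subst. destruct (IH H3) as [cs E].
    destruct t as [h|[|]].
    - destruct (He h H2) as [k Ek]. exists (S (S k) :: cs). simpl. congruence.
    - exists (0 :: cs). simpl; congruence.
    - exists (1 :: cs). simpl; congruence. }
  destruct Hc as [cs E]. destruct (dec_codes_surj cs) as [i Ei]. exists i. unfold decw. congruence.
Qed.

Definition hfirst (w : list sym) : nat -> nat := match w with SG h :: _ => h | _ => S end.
Definition PrW (w : list sym) (R : nat) : list nat := match w with SG h :: _ => [R; h R] | _ => [R] end.
Definition DP (w : list sym) (b : bool) (d : nat) : Prop :=
  forall B, exists m, B <= m /\ Nat.odd (klast w m) = b /\ klast w m + d <> m /\ hfirst w (klast w m + d) <> m.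

Lemma last_in (w : list sym) d : w <> [] -> In (last w d) w.
Proof. intros H. destruct (exists_last H) as [l [a E]]. rewrite E, last_last. apply in_or_app; simpl; auto. Qed.

Section Main.
Variables (G F : (nat -> nat) -> Prop) (z : nat -> bool).
Hypothesis HGsub : IsSubgroup G.
Hypothesis HGcof : Cofinitary G.
Variable eG : nat -> (nat -> nat).
Hypothesis HeG : forall f, G f -> exists k, eG k = f.

Definition dec := decw eG.
Definition Pw (w : list sym) := Red G w /\ CR w.
Definition Wl (s : nat) := map dec (seq 0 (S s)).
Definition good (i : nat) := Red G (dec i) /\ hasX (dec i).

Lemma Red_letok w h : Red G w -> In (SG h) w -> letok h.
Proof. intros [HF _] Hi. rewrite Forall_forall in HF. destruct (HF _ Hi) as [Gh Hn].
  split. apply (Ginj G HGsub); auto. apply (Gfixb G HGcof); auto. Qed.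

Lemma HWl s : forall w, In w (Wl s) -> Pw w -> forall h, In (SG h) w -> letok h.
Proof. intros w _ [HR _] h Hi. eapply Red_letok; eauto. Qed.

Lemma good_shape i : good i -> (exists b0 l, dec i = SX b0 :: l) \/ (exists h1 b0 l, dec i = SG h1 :: SX b0 :: l).
Proof. intros [[HF HC] [bx Hx]]. destruct (dec i) as [|t l]. destruct Hx.
  destruct t as [h|b0]; [right|left; eauto].
  destruct l as [|t2 l]. destruct Hx as [E|[]]; discriminate.
  destruct t2 as [h2|b0]. simpl in HC; tauto. eauto. Qed.

Lemma Dsel_ex i b : good i -> exists d, 1 <= d /\ DP (dec i) b d.
Proof.
  intros Hg. pose proof Hg as [HR _].
  assert (Hk : exists kinv, (forall y, klast (dec i) (kinv y) = y) /\ injf (klast (dec i))).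
  { unfold klast. destruct (list_eq_dec_sym (dec i)) as [E|Hne].
    - rewrite E. simpl. exists (fun y => y). split; auto. intros x y; auto.
    - pose proof (last_in _ (SX true) Hne) as Hin. destruct (last (dec i) (SX true)) as [h|b'].
      + destruct HR as [HF _]. rewrite Forall_forall in HF. destruct (HF _ Hin) as [Gh _].
        destruct HGsub as [Hbij _]. destruct (Hbij h Gh) as [hi [E1 E2]]. exists hi. split; auto.
        apply (Ginj G HGsub); auto.
      + exists (fun y => y). split; auto. intros x y; auto. }
  destruct Hk as [kinv [Hk1 Hk2]].
  assert (Hh : injf (hfirst (dec i))).
  { unfold hfirst. destruct (dec i) as [|t l] eqn:E. intros x y; lia. destruct t as [h|b'].
    apply (Ginj G HGsub). destruct HR as [HF _]. inversion HF; subst. apply H1.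
    intros x y; lia. }
  destruct (dlemma (klast (dec i)) kinv (hfirst (dec i)) Hk1 Hk2 Hh b) as [d [Hd1 Hd2]].
  exists d. split; auto.
Qed.

Definition Dsel (i : nat) (b : bool) : nat := epsilon (inhabits 0) (fun d => 1 <= d /\ DP (dec i) b d).

Lemma Dsel_spec i b : good i -> DP (dec i) b (Dsel i b).
Proof. intros Hg. unfold Dsel. apply (epsilon_spec (inhabits 0) (fun d => 1 <= d /\ DP (dec i) b d)). apply Dsel_ex; auto. Qed.

Lemma code_one s i p R L b : good i -> ~ DD p R -> (forall h l, dec i = SG h :: l -> ~ DD p (h R)) ->
  exists q v, ext Pw (Wl s) p q /\ path q (dec i) R v /\ Nat.odd v = b /\
    (forall x, In x (PrW (dec i) (v + Dsel i b)) -> ~ DD q x /\ ~ In x L) /\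
    (forall x, DD q x -> DD p x \/ In x (PrW (dec i) R) \/ ~ In x L).
Proof.
  intros Hg HR Hh. pose proof (Dsel_spec i b Hg) as HD. pose proof Hg as [[HF HC] _].
  destruct (good_shape i Hg) as [[b0 [l E]]|[h1 [b0 [l E]]]]; rewrite E in *.
  - destruct (greedy_aux Pw (Wl s) (HWl s) (length l) l (le_n _) b0 p R HC
       (fun h Hi => Red_letok (SX b0 :: l) h (conj HF HC) (or_intror Hi)) (free_fresh b0 R p HR)
       L b (Dsel i b) S ltac:(intros x y; lia) HD) as [q [v [He [Hp [Ho [X1 [X2 [X3 [X4 X5]]]]]]]]].
    exists q, v. split; auto. split; auto. split; auto. split.
    + simpl. intros x [<-|[]]. auto.
    + intros x Hx. destruct (X5 x Hx) as [Y|[Y|Y]]; auto. right; left; simpl; auto.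
  - assert (Hfr : free b0 (h1 R) p). { apply free_fresh. apply (Hh h1 _ eq_refl). }
    assert (Hi1 : injf h1). { destruct (Red_letok (SG h1 :: SX b0 :: l) h1 (conj HF HC) (or_introl eq_refl)); auto. }
    destruct (greedy_aux Pw (Wl s) (HWl s) (length l) l (le_n _) b0 p (h1 R) (chain_tail _ _ HC)
       (fun h Hi => Red_letok (SG h1 :: SX b0 :: l) h (conj HF HC) (or_intror (or_intror Hi))) Hfr
       L b (Dsel i b) h1 Hi1 HD) as [q [v [He [Hp [Ho [X1 [X2 [X3 [X4 X5]]]]]]]]].
    exists q, v. split; auto. split. { exists (h1 R). split; [reflexivity|exact Hp]. } split; auto. split.
    + simpl. intros x [<-|[<-|[]]]; auto.
    + intros x Hx. destruct (X5 x Hx) as [Y|[Y|Y]]; auto. right; left; simpl; auto.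
Qed.

Definition Pr (r : nat -> nat) (i : nat) : list nat := PrW (dec i) (r i).
Definition Fr (p : list (nat*nat)) (r : nat -> nat) (Is : list nat) : Prop :=
  (forall i, In i Is -> good i -> forall x, In x (Pr r i) -> ~ DD p x) /\
  (forall i j, In i Is -> In j Is -> good i -> good j -> i <> j -> forall x, In x (Pr r i) -> ~ In x (Pr r j)).
Definition upd (r : nat -> nat) (i R : nat) : nat -> nat := fun j => if Nat.eq_dec j i then R else r j.
Definition Lall (r : nat -> nat) (Is : list nat) (s : nat) : list nat := flat_map (Pr r) Is ++ seq 0 (S s).

Lemma Pr_upd_ne r i R j : j <> i -> Pr (upd r i R) j = Pr r j.
Proof. intros H. unfold Pr, upd. destruct (Nat.eq_dec j i); congruence. Qed.
Lemma Pr_upd_eq r i R : Pr (upd r i R) i = PrW (dec i) R.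
Proof. unfold Pr, upd. destruct (Nat.eq_dec i i); congruence. Qed.

Lemma in_Lall r Is s j x : In j Is -> In x (Pr r j) -> In x (Lall r Is s).
Proof. intros Hj Hx. unfold Lall. apply in_or_app. left. apply in_flat_map. eauto. Qed.
Lemma notin_Lall_gt r Is s x : ~ In x (Lall r Is s) -> s < x.
Proof. intros H. destruct (Nat.lt_ge_cases s x); auto. exfalso. apply H. unfold Lall.
  apply in_or_app. right. apply in_seq. lia. Qed.

Lemma Fr_update p q r Is i R s :
  Fr p r Is -> In i Is -> good i ->
  (forall x, In x (PrW (dec i) R) -> ~ DD q x /\ ~ In x (Lall r Is s)) ->
  (forall x, DD q x -> DD p x \/ In x (Pr r i) \/ ~ In x (Lall r Is s)) ->
  Fr q (upd r i R) Is.
Proof.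
  intros [F1 F2] Hi Gi HN HD. split.
  - intros j Hj Gj x Hx. destruct (Nat.eq_dec j i) as [->|Hne].
    + rewrite Pr_upd_eq in Hx. apply HN; auto.
    + rewrite Pr_upd_ne in Hx; auto. intros Hq. destruct (HD x Hq) as [Y|[Y|Y]].
      * exact (F1 j Hj Gj x Hx Y).
      * exact (F2 i j Hi Hj Gi Gj (not_eq_sym Hne) x Y Hx).
      * apply Y. exact (in_Lall r Is s j x Hj Hx).
  - intros j k Hj Hk Gj Gk Hjk x Hx Hx'.
    destruct (Nat.eq_dec j i) as [->|Hj'].
    + rewrite Pr_upd_eq in Hx. rewrite Pr_upd_ne in Hx' by congruence.
      apply (proj2 (HN x Hx)). exact (in_Lall r Is s k x Hk Hx').
    + rewrite Pr_upd_ne in Hx by auto. destruct (Nat.eq_dec k i) as [->|Hk'].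
      * rewrite Pr_upd_eq in Hx'. apply (proj2 (HN x Hx')). eapply in_Lall; [exact Hj|exact Hx].
      * rewrite Pr_upd_ne in Hx' by auto. exact (F2 j k Hj Hk Gj Gk Hjk x Hx Hx').
Qed.

Lemma code_loop s Is : forall J p r, Fr p r Is -> incl J Is -> NoDup J ->
  exists q r', ext Pw (Wl s) p q /\ Fr q r' Is /\ (forall i, ~ In i J -> r' i = r i) /\
   (forall i, In i J -> good i -> exists v, path q (dec i) (r i) v /\ Nat.odd v = z (s - i - 1) /\
        r' i = v + Dsel i (z (s - i - 1))) /\
   (forall i, In i J -> good i -> forall x, In x (Pr r' i) -> s < x).
Proof.
  induction J as [|i J IH]; intros p r HF Hinc HN.
  - exists p, r. split. constructor. split; auto. split; auto. split; intros i [].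
  - inversion HN; subst.
    destruct (IH p r HF (fun x Hx => Hinc x (or_intror Hx)) H2) as [q1 [r1 [E1 [F1 [U1 [C1 P1]]]]]].
    assert (Hi : In i Is) by (apply Hinc; simpl; auto).
    assert (Ri : r1 i = r i) by (apply U1; auto).
    destruct (classic (good i)) as [Gi|Gi].
    + destruct (code_one s i q1 (r1 i) (Lall r1 Is s) (z (s - i - 1)) Gi) as [q [v [E2 [Hp [Ho [X1 X2]]]]]].
      { apply (proj1 F1 i Hi Gi). unfold Pr, PrW. destruct (dec i) as [|[]]; simpl; auto. }
      { intros h l E. apply (proj1 F1 i Hi Gi). unfold Pr, PrW. rewrite E. simpl; auto. }
      exists q, (upd r1 i (v + Dsel i (z (s - i - 1)))). split; [|split; [|split; [|split]]].
      * exact (ext_trans _ _ _ _ _ E1 E2).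
      * exact (Fr_update q1 q r1 Is i _ s F1 Hi Gi X1 X2).
      * intros j Hj. unfold upd. destruct (Nat.eq_dec j i) as [->|Hne]. exfalso; apply Hj; simpl; auto.
        apply U1. intros Hj'. apply Hj; simpl; auto.
      * intros j [->|Hj] Gj.
        -- exists v. split. rewrite <- Ri. exact Hp. split; auto. unfold upd. destruct (Nat.eq_dec j j); congruence.
        -- destruct (C1 j Hj Gj) as [v' [Hp' [Ho' Er']]]. exists v'. split. eapply path_mono; [|exact Hp'].
           eapply ext_incl; eauto. split; auto. unfold upd. destruct (Nat.eq_dec j i) as [->|]; [contradiction|auto].
      * intros j [->|Hj] Gj x Hx.
        -- rewrite Pr_upd_eq in Hx. apply (notin_Lall_gt r1 Is s). apply X1; auto.
        -- rewrite Pr_upd_ne in Hx. apply (P1 j Hj Gj); auto. intros ->; contradiction.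
    + exists q1, r1. split; auto. split; auto. split.
      * intros j Hj. apply U1. intros Hj'; apply Hj; simpl; auto.
      * split.
        -- intros j [->|Hj] Gj. contradiction. auto.
        -- intros j [->|Hj] Gj. contradiction. apply P1; auto.
Qed.

Lemma Fr_add p r Is e : Fr p r Is -> (forall i, In i Is -> good i -> ~ In (fst e) (Pr r i) /\ ~ In (snd e) (Pr r i)) ->
  Fr (e :: p) r Is.
Proof. intros [F1 F2] H. split; auto. intros i Hi Gi x Hx Hd. apply DD_cons in Hd.
  destruct (H i Hi Gi) as [H1 H2]. destruct Hd as [E|[E|E]]; subst; eauto. eapply F1; eauto. Qed.

Lemma add_edge s Is p r b a : Fr p r Is -> free b a p -> (forall i, In i Is -> good i -> ~ In a (Pr r i)) ->
  exists m, ext Pw (Wl s) p (edge b a m :: p) /\ Fr (edge b a m :: p) r Is.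
Proof.
  intros HF Hf Ha.
  destruct (cofin_and _ _ (cofin_Cm Pw (Wl s) (HWl s) p a) (cofin_notin (flat_map (Pr r) Is))) as [B HB].
  destruct (HB B (le_n _)) as [HC Hn]. exists B. split.
  - econstructor. constructor. auto. auto.
  - apply Fr_add; auto. intros i Hi Gi. destruct b; simpl; split; auto;
    intros Hx; apply Hn; apply in_flat_map; eauto.
Qed.

Section Hit.
Variable f : nat -> nat.
Hypothesis Hfb : is_bij f.
Hypothesis HnG : ~ G f.
Hypothesis Hfc : Cofinitary (genWith G f).

Lemma gen_fixb k : genWith G f k -> ~ (forall n, k n = n) -> fixb k.
Proof. intros Hk Hn. apply Hfc; auto. apply not_all_ex_not in Hn. exact Hn. Qed.

Lemma cofin_hit p s : cofin (fun n => Cm Pw p (Wl s) n (f n)).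
Proof.
  destruct Hfb as [finv [Hf1 Hf2]].
  assert (If : injf f). { intros x y E. rewrite <- (Hf2 x), <- (Hf2 y). congruence. }
  unfold Cm. apply cofin_and. apply cofin_notin_inj; auto. apply cofin_and.
  { apply cofin_nofix. apply gen_fixb. apply gen_base. right; auto.
    intros Hid. apply HnG. destruct HGsub as [_ [Gid _]].
    replace f with (fun n : nat => n); auto. apply functional_extensionality. intros; auto. }
  apply (cofin_mono (fun n => forall w, In w (Wl s) -> Pw w -> forall t, In t w ->
           match t with SG h => LC p n (f n) h | _ => True end)).
  { intros m H w Hw Pw' h Hh. exact (H w Hw Pw' (SG h) Hh). }
  apply cofin_all. intros w Hw. apply cofin_impl. intros Pw'. apply cofin_all.
  intros [h|b] Ht; [|apply cofin_true].
  destruct Pw' as [[HFw _] _]. rewrite Forall_forall in HFw. destruct (HFw _ Ht) as [Gh Hnid].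
  assert (Ih : injf h) by (apply (Ginj G HGsub); auto).
  assert (Fh : fixb h) by (apply (Gfixb G HGcof); auto).
  unfold LC.
  assert (C1 : cofin (fun n => ~ DD p (h (f n)))).
  { apply (cofin_notin_inj (fun n => h (f n))). intros x y E; apply If, Ih; auto. }
  assert (C2 : cofin (fun n => h (f n) <> n)).
  { apply cofin_nofix. apply gen_fixb.
    - apply (gen_comp _ h f); apply gen_base; [left|right]; auto.
    - intros Hid. apply HnG. destruct HGsub as [_ [_ [_ Hinv]]]. apply (Hinv h f Gh Hid).
      intros n. assert (E : h n = finv n). { rewrite <- (Hf1 n) at 1. rewrite Hid. auto. }
      rewrite E. auto. }
  assert (C3 : cofin (fun n => h (f n) <> f n)).
  { destruct Fh as [N HN]. apply (cofin_mono (fun n => ~ In (f n) (seq 0 N))).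
    - intros n Hn E. apply Hn. apply in_seq. specialize (HN _ E). lia.
    - apply cofin_notin_inj; auto. }
  assert (C4 : cofin (fun n => ~ In (f n) (map h (Dl p)))) by (apply cofin_notin_inj; auto).
  assert (C5 : cofin (fun n => finv (h n) <> n)).
  { apply cofin_nofix. apply gen_fixb.
    - apply (gen_comp _ finv h).
      + apply (gen_inv _ f finv). apply gen_base; right; auto. auto. auto.
      + apply gen_base; left; auto.
    - intros Hid. apply HnG. replace f with h; auto. apply functional_extensionality. intros n.
      rewrite <- (Hid n) at 2. rewrite Hf1. auto. }
  apply (cofin_mono (fun n => ((~ DD p (h (f n)) /\ h (f n) <> n) /\ h (f n) <> f n) /\
                               (~ In (f n) (map h (Dl p)) /\ finv (h n) <> n))).
  - intros n [[[A1 A2] A3] [A4 A5]]. split; auto. split; auto. split; auto.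
    intros b Eb. split.
    + intros Hb. apply A4. rewrite <- Eb. apply in_map. exact Hb.
    + intros ->. apply A5. rewrite Eb. apply Hf2.
  - repeat apply cofin_and; auto.
Qed.
End Hit.

Lemma add_hit s Is p r f : is_bij f -> ~ G f -> Cofinitary (genWith G f) -> Fr p r Is ->
  exists n, s <= n /\ ext Pw (Wl s) p ((n, f n) :: p) /\ Fr ((n, f n) :: p) r Is.
Proof.
  intros Hfb HnG Hfc HF. pose proof Hfb as Hfb'. destruct Hfb' as [finv [Hf1 Hf2]].
  assert (If : injf f). { intros x y E. rewrite <- (Hf2 x), <- (Hf2 y). congruence. }
  assert (Hc : cofin (fun n => Cm Pw p (Wl s) n (f n) /\ (~ In n (Dl p) /\
            ~ In n (flat_map (Pr r) Is) /\ ~ In (f n) (flat_map (Pr r) Is)))).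
  { apply cofin_and. apply cofin_hit; auto.
    apply cofin_and. apply cofin_notin. apply cofin_and. apply cofin_notin. apply cofin_notin_inj; auto. }
  destruct (cofin_pick _ s Hc) as [n [Hn [HC [H1 [H2 H3]]]]].
  exists n. split; auto. split.
  - change ((n, f n) :: p) with (edge true n (f n) :: p). econstructor. constructor.
    simpl. intros [y Hy]. apply H1. apply DD_dom. exists y; auto. auto.
  - apply Fr_add; auto. intros i Hi Gi. simpl. split; intros Hx; [apply H2|apply H3]; apply in_flat_map; eauto.
Qed.

Section HitLoop.
Variable eF : nat -> (nat -> nat).
Hypothesis HFsym : forall f, F f -> is_bij f /\ ~ G f.
Hypothesis HFcof : forall f, F f -> Cofinitary (genWith G f).

Lemma hit_loop s Is r J : forall p, Fr p r Is -> exists q, ext Pw (Wl s) p q /\ Fr q r Is /\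
  forall j, In j J -> F (eF j) -> exists n, s <= n /\ In (n, eF j n) q.
Proof.
  induction J as [|j J IH]; intros p HF.
  - exists p. split. constructor. split; auto. intros j [].
  - destruct (IH p HF) as [q1 [E1 [F1 H1]]].
    destruct (classic (F (eF j))) as [Fj|Fj].
    + destruct (HFsym _ Fj) as [Hb HnG].
      destruct (add_hit s Is q1 r (eF j) Hb HnG (HFcof _ Fj) F1) as [n [Hn [E2 F2]]].
      exists ((n, eF j n) :: q1). split. eapply ext_trans; eauto. split; auto.
      intros j' [->|Hj'] Fj'. exists n; simpl; auto.
      destruct (H1 j' Hj' Fj') as [n' [Hn' Hi']]. exists n'. simpl; auto.
    + exists q1. split; auto. split; auto. intros j' [->|Hj'] Fj'. contradiction. auto.
Qed.
End HitLoop.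

Lemma PrW_sub w R x : In x (PrW w R) -> x = R \/ x = hfirst w R.
Proof. unfold PrW, hfirst. destruct w as [|[h|b] l]; simpl; intuition. Qed.

Lemma hfirst_inj i : good i -> injf (hfirst (dec i)).
Proof. intros [[HF _] _]. unfold hfirst. destruct (dec i) as [|[h|b] l]; try (intros x y; lia).
  inversion HF; subst. apply (Ginj G HGsub). apply H1. Qed.

Lemma init_word s p r : Fr p r (seq 0 s) -> (forall i, i < s -> good i -> forall x, In x (Pr r i) -> s < x) ->
  exists r', Fr p r' (seq 0 (S s)) /\ (forall i, i <> s -> r' i = r i) /\
     (forall i, i <= s -> good i -> forall x, In x (Pr r' i) -> s < x).
Proof.
  intros [F1 F2] Hgt. destruct (classic (good s)) as [Gs|Gs].
  - set (L := Lall r (seq 0 s) s).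
    assert (Hc : cofin (fun R => (~ In R (Dl p) /\ ~ In R L) /\ (~ In (hfirst (dec s) R) (Dl p) /\ ~ In (hfirst (dec s) R) L))).
    { pose proof (hfirst_inj s Gs). repeat apply cofin_and; try apply cofin_notin; apply cofin_notin_inj; auto. }
    destruct Hc as [B HB]. destruct (HB B (le_n _)) as [[A1 A2] [A3 A4]].
    assert (HN : forall x, In x (PrW (dec s) B) -> ~ DD p x /\ ~ In x L).
    { intros x Hx. destruct (PrW_sub _ _ _ Hx) as [->| ->]; auto. }
    exists (upd r s B). split; [split|split].
    + intros i Hi Gi x Hx. apply in_seq in Hi. destruct (Nat.eq_dec i s) as [->|Hne].
      * rewrite Pr_upd_eq in Hx. apply HN; auto.
      * rewrite Pr_upd_ne in Hx by auto. apply (F1 i); auto. apply in_seq; lia.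
    + intros i j Hi Hj Gi Gj Hij x Hx Hx'. apply in_seq in Hi. apply in_seq in Hj.
      destruct (Nat.eq_dec i s) as [->|Hi'].
      * rewrite Pr_upd_eq in Hx. rewrite Pr_upd_ne in Hx' by auto. apply (proj2 (HN x Hx)).
        apply (in_Lall r (seq 0 s) s j x); auto. apply in_seq; lia.
      * rewrite Pr_upd_ne in Hx by auto. destruct (Nat.eq_dec j s) as [->|Hj'].
        -- rewrite Pr_upd_eq in Hx'. apply (proj2 (HN x Hx')). apply (in_Lall r (seq 0 s) s i x); auto. apply in_seq; lia.
        -- rewrite Pr_upd_ne in Hx' by auto. exact (F2 i j ltac:(apply in_seq; lia) ltac:(apply in_seq; lia) Gi Gj Hij x Hx Hx').
    + intros i Hi. unfold upd. destruct (Nat.eq_dec i s); congruence.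
    + intros i Hi Gi x Hx. destruct (Nat.eq_dec i s) as [->|Hne].
      * rewrite Pr_upd_eq in Hx. apply (notin_Lall_gt r (seq 0 s) s). apply HN; auto.
      * rewrite Pr_upd_ne in Hx by auto. apply (Hgt i); auto. lia.
  - exists r. split; [split|split]; auto.
    + intros i Hi Gi x Hx. apply in_seq in Hi. destruct (Nat.eq_dec i s) as [->|Hne]. contradiction.
      apply (F1 i); auto. apply in_seq; lia.
    + intros i j Hi Hj Gi Gj Hij. apply in_seq in Hi. apply in_seq in Hj.
      destruct (Nat.eq_dec i s) as [->|Hi']. contradiction. destruct (Nat.eq_dec j s) as [->|Hj']. contradiction.
      exact (F2 i j ltac:(apply in_seq; lia) ltac:(apply in_seq; lia) Gi Gj Hij).
    + intros i Hi Gi. destruct (Nat.eq_dec i s) as [->|Hne]. contradiction. apply Hgt; auto. lia.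
Qed.

Section Stage.
Variable eF : nat -> (nat -> nat).
Hypothesis HFsym : forall f, F f -> is_bij f /\ ~ G f.
Hypothesis HFcof : forall f, F f -> Cofinitary (genWith G f).

Lemma dom_mono p q x : incl p q -> dom p x -> dom q x.
Proof. intros H [y Hy]. exists y; auto. Qed.
Lemma ran_mono p q x : incl p q -> ran p x -> ran q x.
Proof. intros H [y Hy]. exists y; auto. Qed.

Lemma stage s p r : PInj p -> Fr p r (seq 0 s) ->
  exists p' r', PInj p' /\ Fr p' r' (seq 0 (S s)) /\ ext Pw (Wl s) p p' /\ dom p' s /\ ran p' s /\
    (forall j, j <= s -> F (eF j) -> exists n, s <= n /\ In (n, eF j n) p') /\
    (forall i, i < s -> good i -> exists v, path p' (dec i) (r i) v /\ Nat.odd v = z (s - i - 1) /\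
         r' i = v + Dsel i (z (s - i - 1))).
Proof.
  intros HI HF.
  destruct (code_loop s (seq 0 s) (seq 0 s) p r HF (incl_refl _) (seq_NoDup _ _)) as [q1 [r1 [E1 [F1 [U1 [C1 P1]]]]]].
  destruct (init_word s q1 r1 F1) as [r2 [F2 [U2 P2]]].
  { intros i Hi Gi. apply P1; auto. apply in_seq; lia. }
  assert (Hdom : exists q2, ext Pw (Wl s) q1 q2 /\ Fr q2 r2 (seq 0 (S s)) /\ dom q2 s).
  { destruct (classic (dom q1 s)) as [D|D].
    - exists q1. split. constructor. auto.
    - destruct (add_edge s (seq 0 (S s)) q1 r2 true s F2 D) as [m [E Fm]].
      { intros i Hi Gi Hx. apply in_seq in Hi. specialize (P2 i ltac:(lia) Gi s Hx). lia. }
      exists (edge true s m :: q1). split; auto. split; auto. exists m. simpl; auto. }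
  destruct Hdom as [q2 [E2 [F2' D2]]].
  assert (Hran : exists q3, ext Pw (Wl s) q2 q3 /\ Fr q3 r2 (seq 0 (S s)) /\ ran q3 s).
  { destruct (classic (ran q2 s)) as [D|D].
    - exists q2. split. constructor. auto.
    - destruct (add_edge s (seq 0 (S s)) q2 r2 false s F2' D) as [m [E Fm]].
      { intros i Hi Gi Hx. apply in_seq in Hi. specialize (P2 i ltac:(lia) Gi s Hx). lia. }
      exists (edge false s m :: q2). split; auto. split; auto. exists m. simpl; auto. }
  destruct Hran as [q3 [E3 [F3 D3]]].
  destruct (hit_loop eF HFsym HFcof s (seq 0 (S s)) r2 (seq 0 (S s)) q3 F3) as [q4 [E4 [F4 H4]]].
  assert (E24 : ext Pw (Wl s) q2 q4) by (eapply ext_trans; [exact E3|exact E4]).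
  assert (E14 : ext Pw (Wl s) q1 q4) by (eapply ext_trans; [exact E2|exact E24]).
  assert (E : ext Pw (Wl s) p q4) by (eapply ext_trans; [exact E1|exact E14]).
  exists q4, r2. split; [|split; [|split; [|split; [|split; [|split]]]]].
  - eapply ext_PInj; eauto.
  - auto.
  - auto.
  - eapply dom_mono; [|exact D2]. eapply ext_incl. exact E24.
  - eapply ran_mono; [|exact D3]. eapply ext_incl. exact E4.
  - intros j Hj Fj. apply H4; auto. apply in_seq; lia.
  - intros i Hi Gi. destruct (C1 i ltac:(apply in_seq; lia) Gi) as [v [Hp [Ho Er]]].
    exists v. split. eapply path_mono; [|exact Hp]. eapply ext_incl. exact E14.
    split; auto. rewrite U2 by lia. auto.
Qed.
End Stage.

End Main.

Fixpoint cst (k : nat) : prf := match k with 0 => PZero | S k' => PComp PSucc [cst k'] end.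
Lemma cst_ev o k v : peval o (cst k) v k.
Proof. induction k; simpl. constructor. econstructor. econstructor. eauto. constructor. constructor. Qed.

Fixpoint plusc (d : nat) (e : prf) : prf := match d with 0 => e | S d' => PComp PSucc [plusc d' e] end.
Lemma plusc_ev o d e v x : peval o e v x -> peval o (plusc d e) v (x + d).
Proof. intros H. induction d; simpl. rewrite Nat.add_0_r; auto.
  rewrite Nat.add_succ_r. econstructor. econstructor. eauto. constructor. constructor. Qed.

Lemma primrec_ev o f g v a0 (st : nat -> nat -> nat) :
  peval o f v a0 -> (forall n r, peval o g (n :: r :: v) (st n r)) ->
  forall n, peval o (PPrimRec f g) (n :: v) (nat_rect (fun _ => nat) a0 st n).
Proof. intros Hf Hg n. induction n; simpl. constructor; auto. econstructor; eauto. Qed.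

Definition NOTB := PPrimRec (cst 1) PZero.
Lemma notb_ev o y : peval o NOTB [y] (if y =? 0 then 1 else 0).
Proof. pose proof (primrec_ev o (cst 1) PZero [] 1 (fun _ _ => 0) (cst_ev o 1 []) (fun n r => ev_zero o _) y) as H.
  destruct y; exact H. Qed.

Definition PAR := PPrimRec PZero (PComp NOTB [PProj 1]).
Lemma par_ev o x : peval o PAR [x] (if Nat.odd x then 1 else 0).
Proof.
  assert (H : forall n r, peval o (PComp NOTB [PProj 1]) (n :: r :: []) (if r =? 0 then 1 else 0)).
  { intros n r. econstructor. econstructor. apply (ev_proj o 1 [n; r]). simpl; lia. constructor. apply notb_ev. }
  pose proof (primrec_ev o PZero _ [] 0 _ (ev_zero o []) H x) as H2.
  replace (if Nat.odd x then 1 else 0) with (nat_rect (fun _ => nat) 0 (fun _ r => if r =? 0 then 1 else 0) x); auto.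
  clear H2 H. induction x; simpl; auto. rewrite IHx. rewrite Nat.odd_succ. unfold Nat.odd. destruct (Nat.even x); auto.
Qed.

Definition COND (d0 d1 : nat) := PPrimRec (plusc d0 (PProj 0)) (plusc d1 (PProj 2)).
Lemma cond_ev o d0 d1 b y : peval o (COND d0 d1) [b; y] (if b =? 0 then y + d0 else y + d1).
Proof.
  pose proof (primrec_ev o (plusc d0 (PProj 0)) (plusc d1 (PProj 2)) [y] (y + d0) (fun _ _ => y + d1)) as H.
  specialize (H (plusc_ev o d0 _ _ y (ev_proj o 0 [y] ltac:(simpl; lia)))).
  specialize (H (fun n r => plusc_ev o d1 _ _ y (ev_proj o 2 [n; r; y] ltac:(simpl; lia))) b).
  destruct b; exact H.
Qed.

Definition STEP (d0 d1 : nat) :=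
  PComp (COND d0 d1) [PComp PAR [PComp POracle [PProj 1]]; PComp POracle [PProj 1]].
Definition Fstep (o : nat -> nat) (d0 d1 r : nat) := o r + (if Nat.odd (o r) then d1 else d0).
Lemma step_ev o d0 d1 n r : peval o (STEP d0 d1) [n; r] (Fstep o d0 d1 r).
Proof.
  assert (Ho : peval o (PComp POracle [PProj 1]) [n; r] (o r)).
  { econstructor. econstructor. apply (ev_proj o 1 [n; r]). simpl; lia. constructor. constructor. }
  unfold STEP. econstructor. econstructor. econstructor. econstructor. exact Ho. constructor. apply par_ev.
  econstructor. exact Ho. constructor.
  pose proof (cond_ev o d0 d1 (if Nat.odd (o r) then 1 else 0) (o r)) as H.
  unfold Fstep. destruct (Nat.odd (o r)); exact H.
Qed.

Definition cseq (o : nat -> nat) (c0 d0 d1 : nat) (j : nat) : nat :=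
  nat_rect (fun _ => nat) c0 (fun _ r => Fstep o d0 d1 r) j.

Lemma decoder (z : nat -> bool) (o : nat -> nat) c0 d0 d1 :
  (forall j, z j = Nat.odd (o (cseq o c0 d0 d1 j))) -> RecursiveIn z o.
Proof.
  intros Hz. exists (PComp PAR [PComp POracle [PPrimRec (cst c0) (STEP d0 d1)]]).
  intros n. rewrite Hz. econstructor. econstructor. econstructor. econstructor.
  apply (primrec_ev o (cst c0) (STEP d0 d1) [] c0 (fun _ r => Fstep o d0 d1 r) (cst_ev o c0 []) (fun n r => step_ev o d0 d1 n r) n).
  constructor. constructor. constructor. apply par_ev.
Qed.

Definition expand (a : letter) : list sym :=
  match a with LG h => [SG h] | LX k => repeat (SX (0 <? k)%Z) (Z.abs_nat k) end.
Fixpoint conv (w : list letter) : list sym :=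
  match w with [] => [] | a :: w' => conv w' ++ expand a end.

Lemma ev_repeat g gi t n a : ev g gi (repeat t n) a = Nat.iter n (tev g gi t) a.
Proof. revert a; induction n; intros a; simpl; auto. rewrite IHn. rewrite <- Nat.iter_succ_r. reflexivity. Qed.

Lemma word_eval_conv g gi w n : word_eval g gi w n = ev g gi (conv w) n.
Proof. induction w as [|a w IH]; simpl; auto. rewrite ev_app, <- IH.
  destruct a as [h|k]; simpl; auto. rewrite ev_repeat. destruct (0 <? k)%Z; reflexivity. Qed.

Lemma chain_app l1 l2 : chain l1 -> chain l2 ->
  (forall t1 t2 l1' l2', l1 = l1' ++ [t1] -> l2 = t2 :: l2' -> adjok t1 t2) -> chain (l1 ++ l2).
Proof.
  induction l1 as [|a l1 IH]; simpl; auto. intros H1 H2 H.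
  destruct l1 as [|b l1].
  - destruct l2 as [|c l2]; simpl; auto. split; auto. apply (H a c [] l2); auto.
  - simpl. split. tauto. apply IH; auto. tauto. intros t1 t2 l1' l2' E1 E2. apply (H t1 t2 (a :: l1') l2'); auto.
    rewrite E1. reflexivity.
Qed.

Lemma chain_repeat t n : adjok t t -> chain (repeat t n).
Proof. intros H. induction n; simpl; auto. destruct n; simpl in *; auto. Qed.

Lemma repeat_snoc {A} (t : A) n l t1 : repeat t n = l ++ [t1] -> t1 = t.
Proof. intros E. assert (In t1 (repeat t n)) by (rewrite E; apply in_or_app; simpl; auto).
  apply repeat_spec in H; auto. Qed.

Lemma conv_last w a t1 l1 : conv (a :: w) = l1 ++ [t1] -> In t1 (expand a) \/ (expand a = [] /\ exists l1', conv w = l1' ++ [t1]).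
Proof. simpl. intros E. destruct (expand a) as [|x l] eqn:Ea.
  - right. split; auto. rewrite app_nil_r in E. eauto.
  - left. destruct (exists_last (l := x :: l) ltac:(discriminate)) as [l' [y Ey]].
    rewrite Ey, app_assoc in E. apply app_inj_tail in E. destruct E as [_ <-]. rewrite Ey. apply in_or_app; simpl; auto.
Qed.

Lemma Red_conv G w : ReducedWord G w -> Red G (conv w).
Proof.
  intros [HF HA]. split.
  - induction w as [|a w IH]; simpl. constructor. inversion HF; subst. apply Forall_app. split.
    apply IH; auto. destruct w as [|b w]; simpl in *; tauto.
    destruct a as [h|k]; simpl. constructor; simpl; auto. apply Forall_forall. intros x Hx.
    apply repeat_spec in Hx. subst. simpl; auto.
  - induction w as [|a w IH]; simpl. auto.
    assert (HA' : alternating w) by (destruct w as [|b w]; simpl in *; tauto).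
    apply chain_app.
    + apply IH; auto. inversion HF; auto.
    + destruct a as [h|k]; simpl; auto. apply chain_repeat. simpl; auto.
    + intros t1 t2 l1' l2' E1 E2.
      destruct w as [|b w]. { simpl in E1. destruct l1'; discriminate. }
      simpl in HA. destruct HA as [Hsk _].
      destruct (conv_last w b t1 l1' E1) as [Hin|[Hne _]].
      * assert (Hin2 : In t2 (expand a)) by (rewrite E2; simpl; auto).
        destruct a as [h|k]; destruct b as [h'|k']; simpl in Hsk; try tauto; simpl in Hin, Hin2.
        -- destruct Hin2 as [<-|[]]. apply repeat_spec in Hin. subst. simpl; auto.
        -- destruct Hin as [<-|[]]. apply repeat_spec in Hin2. subst. simpl; auto.
      * exfalso. destruct b as [h'|k']; simpl in Hne. discriminate.
        inversion HF; subst. inversion H2; subst. simpl in H3.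
        destruct (Z.abs_nat k') eqn:Ek; [lia|discriminate].
Qed.

Lemma hasX_conv w : (forall k, In (LX k) w -> k <> 0%Z) -> has_x w -> hasX (conv w).
Proof. intros Hk [k Hi]. induction w as [|a w IH]; simpl in *. destruct Hi.
  destruct Hi as [->|Hi].
  - exists (0 <? k)%Z. apply in_or_app. right. simpl.
    assert (Z.abs_nat k <> 0) by (specialize (Hk k (or_introl eq_refl)); lia).
    destruct (Z.abs_nat k); [lia|simpl; auto].
  - destruct (IH (fun k' H => Hk k' (or_intror H)) Hi) as [b Hb]. exists b. apply in_or_app; auto.
Qed.

Lemma start_bound p l : hasX l -> (forall h, In (SG h) l -> injf h) -> exists B, forall a c, path p l a c -> a < B.
Proof.
  induction l as [|t l IH]; intros HX Hi. { destruct HX as [? []]. }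
  destruct t as [h|b].
  - destruct IH as [B HB]. { destruct HX as [b [E|H]]; [discriminate|exists b; auto]. }
    { intros h' H; apply Hi; simpl; auto. }
    destruct (cofin_notin_inj h (Hi h (or_introl eq_refl)) (seq 0 B)) as [B' HB'].
    exists B'. intros a c [x [Ex Hp]]. simpl in Ex. subst x. specialize (HB _ _ Hp).
    destruct (Nat.lt_ge_cases a B'); auto. exfalso. apply (HB' a H). apply in_seq. lia.
  - exists (S (list_max (Dl p))). intros a c [x [Hs _]].
    assert (DD p a). { destruct b; simpl in Hs. apply DD_dom; eexists; eauto. apply DD_ran; eexists; eauto. }
    pose proof (list_max_le (Dl p) (list_max (Dl p))) as [H1 _]. specialize (H1 (le_n _)).
    rewrite Forall_forall in H1. specialize (H1 a H). lia.
Qed.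

Section Final.
Variables (G F : (nat -> nat) -> Prop) (z : nat -> bool).
Hypothesis HGsub : IsSubgroup G.
Hypothesis HGcof : Cofinitary G.
Variable eG : nat -> (nat -> nat).
Hypothesis HeG : forall f, G f -> exists k, eG k = f.
Variable eF : nat -> (nat -> nat).
Hypothesis HeF : forall f, F f -> exists k, eF k = f.
Hypothesis HFsym : forall f, F f -> is_bij f /\ ~ G f.
Hypothesis HFcof : forall f, F f -> Cofinitary (genWith G f).

Definition St := (list (nat*nat) * (nat -> nat))%type.

Definition StepP (s : nat) (st st' : St) : Prop :=
  PInj (fst st') /\ Fr G eG (fst st') (snd st') (seq 0 (S s)) /\ ext (Pw G) (Wl eG s) (fst st) (fst st') /\
  dom (fst st') s /\ ran (fst st') s /\
  (forall j, j <= s -> F (eF j) -> exists n, s <= n /\ In (n, eF j n) (fst st')) /\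
  (forall i, i < s -> good G eG i -> exists v, path (fst st') (dec eG i) (snd st i) v /\
      Nat.odd v = z (s - i - 1) /\ snd st' i = v + Dsel eG i (z (s - i - 1))).

Definition nxt (s : nat) (st : St) : St := epsilon (inhabits st) (StepP s st).
Fixpoint stt (s : nat) : St := match s with 0 => ([], fun _ => 0) | S s' => nxt s' (stt s') end.

Lemma stt_inv s : PInj (fst (stt s)) /\ Fr G eG (fst (stt s)) (snd (stt s)) (seq 0 s).
Proof.
  induction s as [|s IH].
  - simpl. split. split; intros ? ? ? []. split; [intros ? []|intros ? ? []].
  - destruct IH as [H1 H2].
    destruct (stage G F z HGsub HGcof eG eF HFsym HFcof s _ _ H1 H2) as [p' [r' Hst]].
    assert (HS : StepP s (stt s) (nxt s (stt s))).
    { unfold nxt. apply epsilon_spec. exists (p', r'). exact Hst. }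
    change (stt (S s)) with (nxt s (stt s)). destruct HS as [A [B _]]. split; auto.
Qed.

Lemma stt_step s : StepP s (stt s) (stt (S s)).
Proof. destruct (stt_inv s) as [H1 H2].
  destruct (stage G F z HGsub HGcof eG eF HFsym HFcof s _ _ H1 H2) as [p' [r' Hst]].
  change (stt (S s)) with (nxt s (stt s)). unfold nxt. apply epsilon_spec. exists (p', r'). exact Hst. Qed.

Definition PP s := fst (stt s).
Definition RR s := snd (stt s).

Lemma PP_mono s t : s <= t -> incl (PP s) (PP t).
Proof. induction 1. apply incl_refl. eapply incl_tran; eauto.
  destruct (stt_step m) as [_ [_ [E _]]]. apply ext_incl in E. exact E. Qed.

Lemma PP_inj s : PInj (PP s).
Proof. apply stt_inv. Qed.

Definition gg (a : nat) : nat := epsilon (inhabits 0) (fun b => exists s, In (a,b) (PP s)).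
Definition gi (b : nat) : nat := epsilon (inhabits 0) (fun a => exists s, In (a,b) (PP s)).

Lemma gg_spec a : exists s, In (a, gg a) (PP s).
Proof. unfold gg. apply (epsilon_spec (inhabits 0) (fun b => exists s, In (a,b) (PP s))).
  destruct (stt_step a) as [_ [_ [_ [[b Hb] _]]]]. exists b, (S a). exact Hb. Qed.
Lemma gi_spec b : exists s, In (gi b, b) (PP s).
Proof. unfold gi. apply (epsilon_spec (inhabits 0) (fun a => exists s, In (a,b) (PP s))).
  destruct (stt_step b) as [_ [_ [_ [_ [[a Ha] _]]]]]. exists a, (S b). exact Ha. Qed.

Lemma gg_agree a b s : In (a,b) (PP s) -> gg a = b.
Proof. intros H. destruct (gg_spec a) as [s' H']. destruct (PP_inj (s + s')) as [I _].
  apply (I a). apply (PP_mono s'); auto; lia. apply (PP_mono s); auto; lia. Qed.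
Lemma gi_agree a b s : In (a,b) (PP s) -> gi b = a.
Proof. intros H. destruct (gi_spec b) as [s' H']. destruct (PP_inj (s + s')) as [_ I].
  apply (I _ _ b). apply (PP_mono s'); auto; lia. apply (PP_mono s); auto; lia. Qed.

Lemma Hg1 n : gg (gi n) = n.
Proof. destruct (gi_spec n) as [s H]. eapply gg_agree; eauto. Qed.
Lemma Hg2 n : gi (gg n) = n.
Proof. destruct (gg_spec n) as [s H]. eapply gi_agree; eauto. Qed.

Lemma path_ev s l a c : path (PP s) l a c -> ev gg gi l a = c.
Proof. revert a; induction l as [|t l IH]; intros a H; simpl in *; auto.
  destruct H as [b [Hs Hp]]. rewrite <- (IH b Hp). f_equal.
  destruct t as [h|[|]]; simpl in *; auto. eapply gg_agree; eauto. eapply gi_agree; eauto. Qed.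

Lemma ev_path l : forall a, exists s, path (PP s) l a (ev gg gi l a).
Proof. induction l as [|t l IH]; intros a; simpl. exists 0; auto.
  destruct (IH (tev gg gi t a)) as [s Hs].
  assert (Ht : exists s', step (PP s') t a (tev gg gi t a)).
  { destruct t as [h|[|]]; simpl. exists 0; auto. apply gg_spec.
    destruct (gi_spec a) as [s' H]. exists s'. exact H. }
  destruct Ht as [s' Hs']. exists (s + s'). exists (tev gg gi t a). split.
  eapply step_mono; [|exact Hs']. apply PP_mono; lia.
  eapply path_mono; [|exact Hs]. apply PP_mono; lia. Qed.

Lemma in_Wl i s : i <= s -> In (dec eG i) (Wl eG s).
Proof. intros H. unfold Wl. apply in_map. apply in_seq. lia. Qed.

Lemma freeze_down i l a : dec eG i = l -> Pw G l -> forall t, path (PP (i + t)) l a a -> path (PP i) l a a.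
Proof. intros E Hw t. induction t as [|t IH]; intros H. rewrite Nat.add_0_r in H; auto.
  apply IH. destruct (stt_step (i + t)) as [_ [_ [Ext _]]].
  rewrite Nat.add_succ_r in H.
  exact (ext_fix (Pw G) (fun w Hw => proj2 Hw) _ _ _ Ext l ltac:(rewrite <- E; apply in_Wl; lia) Hw a H). Qed.

Lemma Hcr l : Red G l -> CR l -> fixb (ev gg gi l).
Proof.
  intros HR HC.
  destruct (decw_surj G eG HeG l) as [i Ei].
  { eapply Forall_impl; [|apply (proj1 HR)]. intros [|]; simpl; tauto. }
  destruct (start_bound (PP i) l (proj1 (proj2 HC))) as [B HB].
  { intros h Hh. apply (Red_letok G HGsub HGcof l h HR Hh). }
  exists B. intros a Ha. destruct (ev_path l a) as [S HS]. rewrite Ha in HS.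
  apply (HB a a). apply (freeze_down i l a Ei (conj HR HC) (S - i)).
  eapply path_mono; [|exact HS]. apply PP_mono. lia.
Qed.

Lemma cofin_final : Cofinitary (genWith G gg).
Proof.
  intros f Hf Hn. destruct (gen_word G HGsub gg gi Hg1 Hg2 f Hf) as [l [HR E]].
  destruct (classic (hasX l)) as [HX|HX].
  - destruct (fix_reduce G HGsub HGcof gg gi Hg1 Hg2 Hcr (length l) l (le_n _) HR HX) as [N HN].
    exists N. intros n Hfn. apply HN. rewrite <- E. auto.
  - destruct (noX_short G l HR HX) as [->|[h [-> [Gh Hh]]]].
    + exfalso. destruct Hn as [n Hn]. apply Hn. rewrite E. reflexivity.
    + destruct (HGcof h Gh Hh) as [N HN]. exists N. intros n Hfn. apply HN. rewrite E in Hfn. exact Hfn.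
Qed.

Lemma hit_final f : F f -> forall N, exists n, N <= n /\ f n = gg n.
Proof. intros Ff N. destruct (HeF f Ff) as [j Ej].
  destruct (stt_step (N + j)) as [_ [_ [_ [_ [_ [Hh _]]]]]].
  destruct (Hh j ltac:(lia) ltac:(rewrite Ej; auto)) as [n [Hn Hi]].
  exists n. split. lia. rewrite <- Ej. symmetry. eapply gg_agree; eauto. Qed.

Lemma code_final w : ReducedWord G w -> has_x w -> RecursiveIn z (word_eval gg gi w).
Proof.
  intros HR HX. pose proof (Red_conv G w HR) as HR'.
  assert (HX' : hasX (conv w)).
  { apply hasX_conv; auto. intros k Hk. destruct HR as [HF _]. rewrite Forall_forall in HF.
    apply (HF _ Hk). }
  destruct (decw_surj G eG HeG (conv w)) as [i Ei].
  { eapply Forall_impl; [|apply (proj1 HR')]. intros [|]; simpl; tauto. }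
  assert (Gi : good G eG i). { unfold good, dec. rewrite Ei. auto. }
  set (o := word_eval gg gi w).
  set (c0 := RR (S i) i). set (d0 := Dsel eG i false). set (d1 := Dsel eG i true).
  apply (decoder z o c0 d0 d1).
  assert (Hc : forall j, RR (S i + j) i = cseq o c0 d0 d1 j /\ z j = Nat.odd (o (cseq o c0 d0 d1 j))).
  { induction j as [|j IH].
    - split. rewrite Nat.add_0_r. reflexivity.
      destruct (stt_step (S i)) as [_ [_ [_ [_ [_ [_ Hcd]]]]]].
      destruct (Hcd i ltac:(lia) Gi) as [v [Hp [Ho _]]].
      replace (S i - i - 1) with 0 in Ho by lia. rewrite <- Ho.
      f_equal. simpl cseq. unfold o. rewrite word_eval_conv. rewrite <- Ei. fold (dec eG i).
      symmetry. eapply path_ev. exact Hp.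
    - destruct IH as [IH1 IH2].
      destruct (stt_step (S i + j)) as [_ [_ [_ [_ [_ [_ Hcd]]]]]].
      destruct (Hcd i ltac:(lia) Gi) as [v [Hp [Ho Er]]].
      replace (S i + j - i - 1) with j in Ho, Er by lia.
      assert (Ov : o (cseq o c0 d0 d1 j) = v).
      { rewrite <- IH1. unfold o. rewrite word_eval_conv. rewrite <- Ei. fold (dec eG i).
        eapply path_ev. unfold RR. exact Hp. }
      assert (Hz : z j = Nat.odd v) by congruence.
      assert (Hn : RR (S i + S j) i = cseq o c0 d0 d1 (S j)).
      { rewrite Nat.add_succ_r. unfold RR. simpl stt at 1. change (snd (stt (S (S i + j))) i = cseq o c0 d0 d1 (S j)).
        rewrite Er. simpl cseq. unfold Fstep. fold (cseq o c0 d0 d1 j). rewrite Ov.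
        unfold d0, d1. rewrite Hz. destruct (Nat.odd v); reflexivity. }
      split; auto.
      destruct (stt_step (S i + S j)) as [_ [_ [_ [_ [_ [_ Hcd2]]]]]].
      destruct (Hcd2 i ltac:(lia) Gi) as [v2 [Hp2 [Ho2 _]]].
      replace (S i + S j - i - 1) with (S j) in Ho2 by lia.
      rewrite <- Ho2. f_equal. rewrite <- Hn. unfold o. rewrite word_eval_conv. rewrite <- Ei. fold (dec eG i).
      symmetry. eapply path_ev. exact Hp2. }
  intros j. apply Hc.
Qed.
End Final.


Theorem mainTheorem19
  (G : (nat -> nat) -> Prop) (F : (nat -> nat) -> Prop) (z : nat -> bool)
  (HGsub : IsSubgroup G) (HGcof : Cofinitary G) (HGcount : CountableSet G)
  (HFcount : CountableSet F)
  (HFsym : forall f, F f -> is_bij f /\ ~ G f)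
  (HFcof : forall f, F f -> Cofinitary (genWith G f)) :
  exists g ginv : nat -> nat,
    (forall n, g (ginv n) = n) /\ (forall n, ginv (g n) = n) /\
    Cofinitary (genWith G g) /\
    (forall f, F f -> forall N, exists n, N <= n /\ f n = g n) /\
    (forall w, ReducedWord G w -> has_x w -> RecursiveIn z (word_eval g ginv w)).
Proof.
  destruct HGcount as [eG HeG]. destruct HFcount as [eF HeF].
  exists (gg G F z eG eF), (gi G F z eG eF).
  split; [|split; [|split; [|split]]].
  - apply (Hg1 G F z HGsub HGcof eG eF HFsym HFcof).
  - apply (Hg2 G F z HGsub HGcof eG eF HFsym HFcof).
  - apply cofin_final; auto.
  - apply hit_final; auto.
  - apply code_final; auto.
Qed.
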